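(* Let $N\ge1$, $\sigma\ge0$, and let $\psi:[0,2]\to[0,+\infty)$ be a decreasing $C^1$ function with $\psi(2)=0$ and $\psi'(2)<0$. Let $(x_i,v_i)_{i=1}^N$ be the solution of $$\dot x_i=v_i,\qquad \dot v_i=-\frac{\|v_i\|^2}{\|x_i\|^2}x_i+\sum_{j=1}^N\frac{\psi_{ij}}{N}\big(R(x_j,x_i)v_j-v_i\big)+\sum_{k=1}^N\frac{\sigma}{N}\big(\|x_i\|^2x_k-\langle x_i,x_k\rangle x_i\big),\quad \psi_{ij}=\psi(\|x_i-x_j\|),$$ with initial data satisfying $\|x_i(0)\|=1$, $\langle v_i(0),x_i(0)\rangle=0$ for all $i$. Assume $\psi_{ij}=\psi_{ji}$ and $x_i\ne-x_j$ for all $i,j\in\{1,\dots,N\}$. Then, with a positive constant $C$, $$\Big|\frac{d}{dt}\big\|R(x_j,x_i)v_j-v_i\big\|^2\Big|\le C\Big((N\mathcal{E}(0))^{3/2}+\frac{(N\mathcal{E}(0))^{3/2}}{\|x_i+x_j\|}+\max_{1\le l,k\le N}\psi_{lk}\,N\mathcal{E}(0)\Big).$$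
   Context: $\|\cdot\|$ is the Euclidean norm, $\langle\cdot,\cdot\rangle$ the inner product on $\mathbb{R}^3$. For column vectors $x_1,x_2$ in the unit sphere with $x_1\ne-x_2$, $R(x_1,x_2)=I$ if $x_1=x_2$, and otherwise $R(x_1,x_2)=\langle x_1,x_2\rangle I-x_1x_2^T+x_2x_1^T+(1-\langle x_1,x_2\rangle)uu^T$, $u=\frac{x_1\times x_2}{\|x_1\times x_2\|}$; in the system, $\psi_{ij}R(x_j,x_i)v_j$ is taken to be $0$ when $x_j=-x_i$. The energy is $\mathcal{E}=\frac1N\sum_{k=1}^N\|v_k\|^2+\frac{\sigma}{2N^2}\sum_{k,l=1}^N\|x_k-x_l\|^2$. *)

(* Defs.v *)
From Stdlib Require Import Reals Lra ClassicalDescription.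
From Coquelicot Require Import Coquelicot.
Open Scope R_scope.

Definition vec : Type := (R * R * R)%type.

Definition v1 (a : vec) : R := fst (fst a).
Definition v2 (a : vec) : R := snd (fst a).
Definition v3 (a : vec) : R := snd a.

Definition vzero : vec := (0, 0, 0).
Definition vadd (a b : vec) : vec := (v1 a + v1 b, v2 a + v2 b, v3 a + v3 b).
Definition vscal (r : R) (a : vec) : vec := (r * v1 a, r * v2 a, r * v3 a).
Definition vopp (a : vec) : vec := vscal (-1) a.
Definition vsub (a b : vec) : vec := vadd a (vopp b).

Definition dot (a b : vec) : R := v1 a * v1 b + v2 a * v2 b + v3 a * v3 b.
Definition vnorm (a : vec) : R := sqrt (dot a a).
Definition cross (a b : vec) : vec :=
  (v2 a * v3 b - v3 a * v2 b, v3 a * v1 b - v1 a * v3 b, v1 a * v2 b - v2 a * v1 b).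

(** [rot x1 x2 w] is R(x1,x2) w, i.e. the matrix
    R(x1,x2) = <x1,x2> I - x1 x2^T + x2 x1^T + (1 - <x1,x2>) u u^T,
    u = (x1 x x2)/||x1 x x2||, applied to w; R(x1,x1) = I.
    When x1 = -x2, [rot] returns 0 (the paper's convention that
    psi_ij R(x_j,x_i) v_j is taken to be 0 in that case). *)
Definition rot (x1 x2 w : vec) : vec :=
  if excluded_middle_informative (x1 = x2) then w
  else if excluded_middle_informative (x1 = vopp x2) then vzero
  else
    let c := dot x1 x2 in
    let u := vscal (/ vnorm (cross x1 x2)) (cross x1 x2) in
    vadd (vadd (vscal c w) (vscal (- dot x2 w) x1))
         (vadd (vscal (dot x1 w) x2) (vscal ((1 - c) * dot u w) u)).

Fixpoint vsum (f : nat -> vec) (n : nat) : vec :=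
  match n with O => vzero | S m => vadd (vsum f m) (f m) end.
Fixpoint rsum (f : nat -> R) (n : nat) : R :=
  match n with O => 0 | S m => rsum f m + f m end.
(** max_{k < n} f k  (for n >= 1; the seed 0 is harmless for nonnegative f). *)
Fixpoint rmaxn (f : nat -> R) (n : nat) : R :=
  match n with O => 0 | S O => f O | S m => Rmax (rmaxn f m) (f m) end.

Definition in02 (s : R) : Prop := 0 <= s <= 2.

Definition admissible_psi (psi : R -> R) : Prop :=
  exists dpsi : R -> R,
    (forall s, in02 s ->
       filterlim (fun r => (psi r - psi s) / (r - s))
                 (within (fun r => in02 r /\ r <> s) (locally s))
                 (locally (dpsi s))) /\
    (forall s, in02 s ->
       filterlim dpsi (within in02 (locally s)) (locally (dpsi s))) /\
    (forall s, in02 s -> 0 <= psi s) /\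
    (forall a b, in02 a -> in02 b -> a <= b -> psi b <= psi a) /\
    psi 2 = 0 /\ dpsi 2 < 0.

Definition psiij (psi : R -> R) (x : nat -> R -> vec) (i j : nat) (t : R) : R :=
  psi (vnorm (vsub (x i t) (x j t))).

Definition accel (N : nat) (sigma : R) (psi : R -> R)
    (x v : nat -> R -> vec) (i : nat) (t : R) : vec :=
  vadd
    (vscal (- (vnorm (v i t))^2 / (vnorm (x i t))^2) (x i t))
    (vadd
      (vsum (fun j => vscal (psiij psi x i j t / INR N)
                            (vsub (rot (x j t) (x i t) (v j t)) (v i t))) N)
      (vsum (fun k => vscal (sigma / INR N)
                            (vsub (vscal ((vnorm (x i t))^2) (x k t))
                                  (vscal (dot (x i t) (x k t)) (x i t)))) N)).

(** (x,v) is a solution on [0,+oo): the ODE holds for t > 0 and the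
    trajectories are right-continuous at 0 (so the initial data are attained). *)
Definition is_solution (N : nat) (sigma : R) (psi : R -> R)
    (x v : nat -> R -> vec) : Prop :=
  forall i, (i < N)%nat ->
    (forall t, 0 < t ->
       is_derive (x i) t (v i t) /\
       is_derive (v i) t (accel N sigma psi x v i t)) /\
    filterlim (x i) (at_right 0) (locally (x i 0)) /\
    filterlim (v i) (at_right 0) (locally (v i 0)).

Definition energy (N : nat) (sigma : R) (x v : nat -> R -> vec) (t : R) : R :=
  / INR N * rsum (fun k => (vnorm (v k t))^2) N
  + sigma / (2 * (INR N)^2)
    * rsum (fun k => rsum (fun l => (vnorm (vsub (x k t) (x l t)))^2) N) N.

Definition maxpsi (N : nat) (psi : R -> R) (x : nat -> R -> vec) (t : R) : R :=
  rmaxn (fun l => rmaxn (fun k => psiij psi x l k t) N) N.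

Definition misalign (x v : nat -> R -> vec) (i j : nat) (s : R) : R :=
  (vnorm (vsub (rot (x j s) (x i s) (v j s)) (v i s)))^2.

(* Main.v *)
Require Import Defs.
From Stdlib Require Import Reals.
From Coquelicot Require Import Coquelicot.
From Stdlib Require Import Lra Psatz ClassicalDescription FunctionalExtensionality Classical.
Open Scope R_scope.

Ltac vdes := repeat match goal with v : vec |- _ => let a := fresh "a" in let b := fresh "b" in let c := fresh "c" in destruct v as [[a b] c] end.
Ltac vunf := cbv [dot vadd vscal vsub vopp cross v1 v2 v3 vzero fst snd] in *.

Lemma dot_comm a b : dot a b = dot b a.
Proof. vdes; vunf; ring. Qed.
Lemma dot_ge0 a : 0 <= dot a a.
Proof. vdes; vunf; nra. Qed.
Lemma vnorm_ge0 a : 0 <= vnorm a.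
Proof. apply sqrt_pos. Qed.
Lemma vnorm_sq a : vnorm a ^ 2 = dot a a.
Proof. unfold vnorm. rewrite pow2_sqrt; auto using dot_ge0. Qed.
Lemma vnorm_sq' a : vnorm a * vnorm a = dot a a.
Proof. unfold vnorm. rewrite sqrt_sqrt; auto using dot_ge0. Qed.

Lemma lagrange a b : dot (cross a b) (cross a b) = dot a a * dot b b - (dot a b)^2.
Proof. vdes; vunf; ring. Qed.

Lemma le_sqrt_of_sq x B : 0 <= B -> x <= B^2 -> sqrt x <= B.
Proof. intros HB H. rewrite <- (sqrt_pow2 B HB). destruct (Rle_lt_dec 0 x).
 - apply sqrt_le_1; [lra | nra | lra]. - rewrite (sqrt_neg_0 x) by lra. apply sqrt_pos. Qed.

Lemma vnorm_le a B : 0 <= B -> dot a a <= B^2 -> vnorm a <= B.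
Proof. intros; unfold vnorm; apply le_sqrt_of_sq; auto. Qed.

Lemma cs_sq a b : (dot a b)^2 <= dot a a * dot b b.
Proof. pose proof (lagrange a b). pose proof (dot_ge0 (cross a b)). lra. Qed.

Lemma cs a b : Rabs (dot a b) <= vnorm a * vnorm b.
Proof.
 pose proof (cs_sq a b). pose proof (vnorm_ge0 a). pose proof (vnorm_ge0 b).
 apply Rsqr_incr_0_var; [|nra]. rewrite <- Rsqr_abs. unfold Rsqr.
 replace (vnorm a * vnorm b * (vnorm a * vnorm b)) with ((vnorm a * vnorm a) * (vnorm b * vnorm b)) by ring.
 rewrite !vnorm_sq'. nra.
Qed.

Lemma cs_le a b : dot a b <= vnorm a * vnorm b.
Proof. pose proof (cs a b). pose proof (Rle_abs (dot a b)). lra. Qed.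

Lemma vnorm_add a b : vnorm (vadd a b) <= vnorm a + vnorm b.
Proof.
 apply vnorm_le. pose proof (vnorm_ge0 a); pose proof (vnorm_ge0 b); lra.
 replace (dot (vadd a b) (vadd a b)) with (dot a a + 2 * dot a b + dot b b) by (vdes; vunf; ring).
 pose proof (cs_le a b). rewrite <- !vnorm_sq'. nra.
Qed.

Lemma vnorm_scal r a : vnorm (vscal r a) = Rabs r * vnorm a.
Proof.
 unfold vnorm. replace (dot (vscal r a) (vscal r a)) with (r^2 * dot a a) by (vdes; vunf; ring).
 rewrite sqrt_mult; [| nra | apply dot_ge0]. rewrite <- sqrt_Rsqr_abs. unfold Rsqr. f_equal. f_equal. ring.
Qed.

Lemma vnorm_opp a : vnorm (vopp a) = vnorm a.
Proof. unfold vopp. rewrite vnorm_scal. replace (Rabs (-1)) with 1 by (rewrite Rabs_left; lra). ring. Qed.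

Lemma vnorm_sub a b : vnorm (vsub a b) <= vnorm a + vnorm b.
Proof. unfold vsub. rewrite <- (vnorm_opp b). apply vnorm_add. Qed.

Lemma vnorm_sub_sym a b : vnorm (vsub a b) = vnorm (vsub b a).
Proof. unfold vnorm. replace (dot (vsub a b) (vsub a b)) with (dot (vsub b a) (vsub b a)) by (vdes; vunf; ring). auto. Qed.

Lemma vnorm_cross a b : vnorm (cross a b) <= vnorm a * vnorm b.
Proof.
 apply vnorm_le. pose proof (vnorm_ge0 a); pose proof (vnorm_ge0 b); nra.
 rewrite lagrange. replace ((vnorm a * vnorm b)^2) with ((vnorm a * vnorm a) * (vnorm b * vnorm b)) by ring.
 rewrite !vnorm_sq'. nra.
Qed.

Lemma dot_scal_abs r a b : Rabs (dot (vscal r a) b) <= Rabs r * vnorm a * vnorm b.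
Proof.
 replace (dot (vscal r a) b) with (r * dot a b) by (vdes; vunf; ring).
 rewrite Rabs_mult. pose proof (cs a b). pose proof (Rabs_pos r). nra.
Qed.

Lemma dot_add_r a b c : dot a (vadd b c) = dot a b + dot a c.
Proof. vdes; vunf; ring. Qed.
Lemma dot_sub_r a b c : dot a (vsub b c) = dot a b - dot a c.
Proof. vdes; vunf; ring. Qed.
Lemma dot_scal_r a r b : dot a (vscal r b) = r * dot a b.
Proof. vdes; vunf; ring. Qed.

Lemma rsum_ext f g n : (forall k, (k < n)%nat -> f k = g k) -> rsum f n = rsum g n.
Proof. induction n; simpl; intros; auto. rewrite IHn by auto. rewrite H by auto. auto. Qed.
Lemma rsum_le f g n : (forall k, (k < n)%nat -> f k <= g k) -> rsum f n <= rsum g n.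
Proof. induction n; simpl; intros. lra. pose proof (IHn (fun k Hk => H k (Nat.lt_lt_succ_r _ _ Hk))). pose proof (H n (Nat.lt_succ_diag_r n)). lra. Qed.
Lemma rsum_plus f g n : rsum (fun k => f k + g k) n = rsum f n + rsum g n.
Proof. induction n; simpl. ring. rewrite IHn. ring. Qed.
Lemma rsum_minus f g n : rsum (fun k => f k - g k) n = rsum f n - rsum g n.
Proof. induction n; simpl. ring. rewrite IHn. ring. Qed.
Lemma rsum_scal c f n : rsum (fun k => c * f k) n = c * rsum f n.
Proof. induction n; simpl. ring. rewrite IHn. ring. Qed.
Lemma rsum_const c n : rsum (fun _ => c) n = INR n * c.
Proof. induction n; simpl rsum. simpl; ring. rewrite IHn, S_INR. ring. Qed.
Lemma rsum_zero n : rsum (fun _ => 0) n = 0.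
Proof. rewrite rsum_const. ring. Qed.
Lemma rsum_nonneg f n : (forall k, (k < n)%nat -> 0 <= f k) -> 0 <= rsum f n.
Proof. intros. rewrite <- (rsum_zero n). apply rsum_le. auto. Qed.
Lemma rsum_single f n k : (forall k, (k < n)%nat -> 0 <= f k) -> (k < n)%nat -> f k <= rsum f n.
Proof.
 induction n; simpl; intros. lia.
 assert (0 <= rsum f n) by (apply rsum_nonneg; intros; apply H; lia).
 destruct (Nat.eq_dec k n). subst. lra.
 assert (f k <= rsum f n) by (apply IHn; [intros; apply H; lia | lia]).
 pose proof (H n ltac:(lia)). lra.
Qed.
Lemma rsum_swap f n m : rsum (fun k => rsum (fun l => f k l) m) n = rsum (fun l => rsum (fun k => f k l) n) m.
Proof.
 induction n; simpl. rewrite rsum_zero. auto.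
 rewrite IHn. rewrite <- rsum_plus. auto.
Qed.
Lemma rsum_abs f n : Rabs (rsum f n) <= rsum (fun k => Rabs (f k)) n.
Proof. induction n; simpl. rewrite Rabs_R0; lra. eapply Rle_trans. apply Rabs_triang. lra. Qed.
Lemma rsum_cs f n : (rsum f n)^2 <= INR n * rsum (fun k => f k ^ 2) n.
Proof.
 induction n; simpl rsum. simpl; lra. rewrite S_INR.
 assert (H2: 2 * f n * rsum f n <= INR n * f n ^ 2 + rsum (fun k => f k ^ 2) n).
 {
   assert (rsum (fun k => 2 * f n * f k) n <= rsum (fun k => f n ^ 2 + f k ^ 2) n).
   { apply rsum_le. intros k _. pose proof (pow2_ge_0 (f n - f k)). nra. }
   rewrite rsum_scal, rsum_plus, rsum_const in H. lra. }
 replace (rsum (fun k => f k * (f k * 1)) n) with (rsum (fun k => f k ^ 2) n) by (apply rsum_ext; intros; ring). nra.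
Qed.

Lemma vsum_dot a f n : dot a (vsum f n) = rsum (fun k => dot a (f k)) n.
Proof. induction n; simpl. vunf; ring. rewrite dot_add_r, IHn. auto. Qed.
Lemma vnorm_vsum f n : vnorm (vsum f n) <= rsum (fun k => vnorm (f k)) n.
Proof. induction n; simpl rsum; simpl vsum. unfold vnorm. replace (dot vzero vzero) with 0 by (vunf; ring). rewrite sqrt_0; lra.
 eapply Rle_trans. apply vnorm_add. lra. Qed.

Definition vder (f : R -> vec) (t : R) (l : vec) : Prop :=
  is_derive (fun s => v1 (f s)) t (v1 l) /\ is_derive (fun s => v2 (f s)) t (v2 l) /\
  is_derive (fun s => v3 (f s)) t (v3 l).

Lemma vder_of (f : R -> vec) t l : is_derive f t l -> vder f t l.
Proof.
 intros H. unfold vder, v1, v2, v3. split; [|split]; unfold is_derive.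
 - eapply filterdiff_ext_lin. eapply filterdiff_comp. eapply filterdiff_comp. exact H.
   apply filterdiff_linear, is_linear_fst. apply filterdiff_linear, is_linear_fst. intros y; reflexivity.
 - eapply filterdiff_ext_lin. eapply filterdiff_comp. eapply filterdiff_comp. exact H.
   apply filterdiff_linear, is_linear_fst. apply filterdiff_linear, is_linear_snd. intros y; reflexivity.
 - eapply filterdiff_ext_lin. eapply filterdiff_comp. exact H.
   apply filterdiff_linear, is_linear_snd. intros y; reflexivity.
Qed.

Lemma der_eq (f : R -> R) (t a b : R) : is_derive f t a -> a = b -> is_derive f t b.
Proof. intros; subst; auto. Qed.
Lemma der_add (f g : R -> R) (t a b : R) : is_derive f t a -> is_derive g t b -> is_derive (fun s => f s + g s) t (a + b).
Proof. intros. apply (is_derive_plus f g t a b); auto. Qed.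
Lemma der_sub (f g : R -> R) (t a b : R) : is_derive f t a -> is_derive g t b -> is_derive (fun s => f s - g s) t (a - b).
Proof. intros. apply (is_derive_minus f g t a b); auto. Qed.
Lemma der_opp (f : R -> R) (t a : R) : is_derive f t a -> is_derive (fun s => - f s) t (- a).
Proof. intros. apply (is_derive_opp f t a); auto. Qed.
Lemma der_mul (f g : R -> R) (t a b : R) : is_derive f t a -> is_derive g t b -> is_derive (fun s => f s * g s) t (a * g t + f t * b).
Proof. intros. apply (is_derive_mult f g t a b); auto. intros; apply Rmult_comm. Qed.
Lemma der_const (c t : R) : is_derive (fun _ => c) t 0.
Proof. apply (is_derive_const c t). Qed.
Lemma der_id (t : R) : is_derive (fun s => s) t 1.
Proof. apply (is_derive_id t). Qed.
Lemma der_inv (f : R -> R) (t a : R) : is_derive f t a -> f t <> 0 -> is_derive (fun s => / f s) t (- a / (f t)^2).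
Proof. intros. apply is_derive_inv; auto. Qed.

Lemma dot_der f g t f' g' : vder f t f' -> vder g t g' ->
  is_derive (fun s => dot (f s) (g s)) t (dot f' (g t) + dot (f t) g').
Proof.
 intros [H1 [H2 H3]] [G1 [G2 G3]]. unfold dot.
 eapply der_eq. apply der_add. apply der_add. apply der_mul; eauto. apply der_mul; eauto. apply der_mul; eauto.
 cbv beta; ring.
Qed.

Lemma vder_eq f t a b : vder f t a -> a = b -> vder f t b.
Proof. intros; subst; auto. Qed.

Lemma vder_add f g t a b : vder f t a -> vder g t b -> vder (fun s => vadd (f s) (g s)) t (vadd a b).
Proof. intros [H1 [H2 H3]] [G1 [G2 G3]]. unfold vder, vadd, v1, v2, v3 in *; simpl in *.
 split; [|split]; apply der_add; auto. Qed.

Lemma vder_scal r f t r' a : is_derive r t r' -> vder f t a ->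
  vder (fun s => vscal (r s) (f s)) t (vadd (vscal r' (f t)) (vscal (r t) a)).
Proof. intros R [H1 [H2 H3]]. unfold vder, vadd, vscal, v1, v2, v3 in *; simpl in *.
 split; [|split]; apply der_mul; auto. Qed.

Lemma vder_sub f g t a b : vder f t a -> vder g t b -> vder (fun s => vsub (f s) (g s)) t (vsub a b).
Proof. intros [H1 [H2 H3]] [G1 [G2 G3]]. unfold vder, vsub, vopp, vadd, vscal, v1, v2, v3 in *; simpl in *.
 split; [|split]; (eapply der_eq; [apply der_add; [eauto| apply der_mul; [apply der_const | eauto]] | cbv beta; ring]). Qed.

Lemma vder_cross f g t a b : vder f t a -> vder g t b ->
  vder (fun s => cross (f s) (g s)) t (vadd (cross a (g t)) (cross (f t) b)).
Proof. intros [H1 [H2 H3]] [G1 [G2 G3]]. unfold vder, cross, vadd, v1, v2, v3 in *; simpl in *.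
 split; [|split]; (eapply der_eq; [apply der_sub; apply der_mul; eauto | cbv beta; ring]). Qed.

Section Lim.
Context {T : Type} {F : (T -> Prop) -> Prop} {FF : Filter F}.

Lemma lim_add (f g : T -> R) a b : filterlim f F (locally a) -> filterlim g F (locally b) ->
  filterlim (fun s => f s + g s) F (locally (a + b)).
Proof. intros. eapply (filterlim_comp_2 f g Rplus); eauto. apply (filterlim_plus a b). Qed.
Lemma lim_mul (f g : T -> R) a b : filterlim f F (locally a) -> filterlim g F (locally b) ->
  filterlim (fun s => f s * g s) F (locally (a * b)).
Proof. intros. eapply (filterlim_comp_2 f g Rmult); eauto. apply (filterlim_mult a b). Qed.
Lemma lim_cst (c : R) : filterlim (fun _ : T => c) F (locally c).
Proof. apply filterlim_const. Qed.
Lemma lim_sub (f g : T -> R) a b : filterlim f F (locally a) -> filterlim g F (locally b) ->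
  filterlim (fun s => f s - g s) F (locally (a - b)).
Proof. intros. unfold Rminus. apply lim_add; auto.
 replace (fun s => - g s) with (fun s => (-1) * g s) by (apply functional_extensionality; intros; ring).
 replace (- b) with ((-1) * b) by ring. apply lim_mul; auto. apply lim_cst. Qed.

Lemma lim_comp_v1 (f : T -> vec) a : filterlim f F (locally a) ->
  filterlim (fun s => v1 (f s)) F (locally (v1 a)).
Proof. intros. unfold v1. eapply filterlim_comp. eapply filterlim_comp. exact H.
 apply (linear_cont (fun t : prod_NormedModule R_AbsRing (prod_NormedModule R_AbsRing R_NormedModule R_NormedModule) R_NormedModule => fst t)). apply is_linear_fst.
 apply (linear_cont (fun t : prod_NormedModule R_AbsRing R_NormedModule R_NormedModule => fst t)). apply is_linear_fst.
Qed.
Lemma lim_comp_v2 (f : T -> vec) a : filterlim f F (locally a) ->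
  filterlim (fun s => v2 (f s)) F (locally (v2 a)).
Proof. intros. unfold v2. eapply filterlim_comp. eapply filterlim_comp. exact H.
 apply (linear_cont (fun t : prod_NormedModule R_AbsRing (prod_NormedModule R_AbsRing R_NormedModule R_NormedModule) R_NormedModule => fst t)). apply is_linear_fst.
 apply (linear_cont (fun t : prod_NormedModule R_AbsRing R_NormedModule R_NormedModule => snd t)). apply is_linear_snd.
Qed.
Lemma lim_comp_v3 (f : T -> vec) a : filterlim f F (locally a) ->
  filterlim (fun s => v3 (f s)) F (locally (v3 a)).
Proof. intros. unfold v3. eapply filterlim_comp. exact H.
 apply (linear_cont (fun t : prod_NormedModule R_AbsRing (prod_NormedModule R_AbsRing R_NormedModule R_NormedModule) R_NormedModule => snd t)). apply is_linear_snd.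
Qed.

Lemma lim_dot (f g : T -> vec) a b : filterlim f F (locally a) -> filterlim g F (locally b) ->
  filterlim (fun s => dot (f s) (g s)) F (locally (dot a b)).
Proof. intros. unfold dot. repeat apply lim_add; apply lim_mul;
  first [apply lim_comp_v1 | apply lim_comp_v2 | apply lim_comp_v3]; auto. Qed.

Lemma lim_rsum (f : nat -> T -> R) (a : nat -> R) n :
  (forall k, (k < n)%nat -> filterlim (f k) F (locally (a k))) ->
  filterlim (fun s => rsum (fun k => f k s) n) F (locally (rsum a n)).
Proof. induction n; simpl; intros. apply lim_cst. apply lim_add; auto. Qed.

Lemma ev_forall (P : nat -> T -> Prop) n : (forall k, (k < n)%nat -> F (P k)) ->
  F (fun s => forall k, (k < n)%nat -> P k s).
Proof.
 induction n; intros. apply filter_forall. intros; lia.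
 eapply filter_imp. 2: apply filter_and. 2: apply IHn; intros; apply H; lia. 2: apply (H n); lia.
 intros s [H1 H2] k Hk. destruct (Nat.eq_dec k n). subst; auto. apply H1; lia.
Qed.
End Lim.

Ltac veq tac := vdes; vunf; repeat (apply pair_equal_spec; split); tac.

Definition Rt (y x w : vec) : vec :=
  vadd (vadd (vscal (dot y x) w) (vscal (- dot x w) y))
       (vadd (vscal (dot y w) x) (vscal (dot (cross y x) w / (1 + dot y x)) (cross y x))).

Definition Eterm (y x w y' x' : vec) : vec :=
 vadd (vadd (vadd (vscal (dot y' x + dot y x') w) (vscal (- dot x' w) y))
            (vadd (vscal (- dot x w) y') (vscal (dot y' w) x)))
      (vadd (vadd (vscal (dot y w) x') (vscal (dot (vadd (cross y' x) (cross y x')) w / (1 + dot y x)) (cross y x)))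
            (vadd (vscal (- (dot (cross y x) w * (dot y' x + dot y x')) / (1 + dot y x)^2) (cross y x))
                  (vscal (dot (cross y x) w / (1 + dot y x)) (vadd (cross y' x) (cross y x'))))).

Lemma Rt_der Y X W t y' x' w' : vder Y t y' -> vder X t x' -> vder W t w' ->
  1 + dot (Y t) (X t) <> 0 ->
  vder (fun s => Rt (Y s) (X s) (W s)) t (vadd (Rt (Y t) (X t) w') (Eterm (Y t) (X t) (W t) y' x')).
Proof.
 intros HY HX HW Hc. unfold Rt.
 eapply vder_eq.
 apply vder_add; apply vder_add.
 - apply vder_scal. apply dot_der; [exact HY | exact HX]. exact HW.
 - apply vder_scal. apply der_opp. apply dot_der; [exact HX | exact HW]. exact HY.
 - apply vder_scal. apply dot_der; [exact HY | exact HW]. exact HX.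
 - Time apply vder_scal. unfold Rdiv. Time apply der_mul. Time apply dot_der. Time apply vder_cross; [exact HY | exact HX]. exact HW.
     Time apply der_inv. Time apply der_add. apply der_const. apply dot_der; [exact HY | exact HX]. Time auto.
     apply vder_cross; [exact HY | exact HX].
 - unfold Eterm, Rt. set (Yt := Y t) in *. set (Xt := X t) in *. set (Wt := W t) in *.
   clearbody Yt Xt Wt. revert Hc. Time vdes. Time vunf. intros Hc. Time repeat (apply pair_equal_spec; split). 
   all: field; exact Hc.
Qed.

Lemma dot_zero a : dot a a = 0 -> a = vzero.
Proof. vdes; vunf. intros. assert (a0 = 0) by nra. assert (b = 0) by nra. assert (c = 0) by nra. subst. auto. Qed.

Lemma Rt_x (x w : vec) : dot x x = 1 -> Rt x x w = w.
Proof. intros Hx. unfold Rt. rewrite Hx. veq ltac:(field). Qed.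

Lemma sphere_c_bounds x y : dot x x = 1 -> dot y y = 1 -> -1 <= dot y x <= 1.
Proof. intros. pose proof (cs_sq y x). rewrite H, H0 in H1. nra. Qed.

Lemma sphere_cross x y : dot x x = 1 -> dot y y = 1 ->
  dot (cross y x) (cross y x) = (1 - dot y x) * (1 + dot y x).
Proof. intros. rewrite lagrange, H, H0. ring. Qed.

Lemma sphere_neq_opp x y : dot x x = 1 -> dot y y = 1 -> y <> vopp x -> 1 + dot y x <> 0.
Proof.
 intros Hx Hy Hn Hc. apply Hn.
 assert (dot (vadd y x) (vadd y x) = 0).
 { replace (dot (vadd y x) (vadd y x)) with (dot y y + 2 * dot y x + dot x x) by (vdes; vunf; ring). lra. }
 apply dot_zero in H. revert H. vdes; vunf. intros H. inversion H.
 f_equal; [f_equal|]; lra.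
Qed.

Lemma sphere_neq x y : dot x x = 1 -> dot y y = 1 -> y <> x -> 1 - dot y x <> 0.
Proof.
 intros Hx Hy Hn Hc. apply Hn.
 assert (dot (vsub y x) (vsub y x) = 0).
 { replace (dot (vsub y x) (vsub y x)) with (dot y y - 2 * dot y x + dot x x) by (vdes; vunf; ring). lra. }
 apply dot_zero in H. revert H. vdes; vunf. intros H. inversion H.
 f_equal; [f_equal|]; lra.
Qed.

Lemma rot_Rt x y w : dot x x = 1 -> dot y y = 1 -> y <> vopp x -> rot y x w = Rt y x w.
Proof.
 intros Hx Hy Hn. unfold rot.
 destruct (excluded_middle_informative (y = x)) as [E|E].
 { subst. rewrite Rt_x; auto. }
 destruct (excluded_middle_informative (y = vopp x)) as [E'|E']. contradiction.
 pose proof (sphere_neq_opp x y Hx Hy Hn) as H1.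
 pose proof (sphere_neq x y Hx Hy E) as H2.
 pose proof (sphere_cross x y Hx Hy) as Hk.
 cbv zeta. unfold Rt.
 set (c := dot y x) in *. set (k := cross y x) in *.
 assert (Hn2 : vnorm k * vnorm k = (1 - c) * (1 + c)) by (rewrite vnorm_sq'; auto).
 assert (Hnz : vnorm k <> 0). { intro Z. rewrite Z in Hn2. assert ((1-c)*(1+c) <> 0) by (apply Rmult_integral_contrapositive; auto). lra. }
 assert (Hinv : / vnorm k * / vnorm k = / ((1 - c) * (1 + c))) by (rewrite <- Hn2; field; auto).
 replace (vscal ((1 - c) * dot (vscal (/ vnorm k) k) w) (vscal (/ vnorm k) k))
   with (vscal (dot k w / (1 + c)) k). reflexivity.
 replace (vscal ((1 - c) * dot (vscal (/ vnorm k) k) w) (vscal (/ vnorm k) k))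
   with (vscal ((1 - c) * (/ vnorm k * / vnorm k) * dot k w) k) by (veq ltac:(ring)).
 rewrite Hinv. f_equal. field. auto.
Qed.

Lemma Rt_dot_x x y w : dot x x = 1 -> dot x (Rt y x w) = dot y w.
Proof.
 intros Hx. unfold Rt. rewrite !dot_add_r, !dot_scal_r, Hx.
 replace (dot x (cross y x)) with 0 by (vdes; vunf; ring). rewrite (dot_comm x y). ring.
Qed.

Lemma Rt_add y x a b : Rt y x (vadd a b) = vadd (Rt y x a) (Rt y x b).
Proof. unfold Rt. veq ltac:(unfold Rdiv; ring). Qed.
Lemma Rt_scal y x r a : Rt y x (vscal r a) = vscal r (Rt y x a).
Proof. unfold Rt. veq ltac:(unfold Rdiv; ring). Qed.
Lemma Rt_sub y x a b : Rt y x (vsub a b) = vsub (Rt y x a) (Rt y x b).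
Proof. unfold Rt. veq ltac:(unfold Rdiv; ring). Qed.

Lemma Rt_y x y : dot y y = 1 -> Rt y x y = x.
Proof.
 intros Hy. unfold Rt. rewrite Hy, (dot_comm x y).
 replace (dot (cross y x) y) with 0 by (vdes; vunf; ring). veq ltac:(unfold Rdiv; ring).
Qed.

Lemma Rt_rodrigues y x z : Rt y x z =
  vadd (vadd (vscal (dot y x) z) (cross (cross y x) z)) (vscal (dot (cross y x) z / (1 + dot y x)) (cross y x)).
Proof. unfold Rt. veq ltac:(unfold Rdiv; ring). Qed.

Lemma rodr_expand c g k z : dot (vadd (vadd (vscal c z) (cross k z)) (vscal g k)) (vadd (vadd (vscal c z) (cross k z)) (vscal g k))
  = c^2 * dot z z + (dot k k * dot z z - (dot k z)^2) + g^2 * dot k k + 2 * c * g * dot k z.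
Proof. vdes; vunf; ring. Qed.

Lemma Rt_norm2 x y z : dot x x = 1 -> dot y y = 1 -> 1 + dot y x <> 0 ->
  dot (Rt y x z) (Rt y x z) = dot z z.
Proof.
 intros Hx Hy Hc. rewrite Rt_rodrigues, rodr_expand.
 rewrite (sphere_cross x y Hx Hy). field. auto.
Qed.

Lemma Rt_norm x y z : dot x x = 1 -> dot y y = 1 -> 1 + dot y x <> 0 ->
  vnorm (Rt y x z) = vnorm z.
Proof. intros. unfold vnorm. rewrite Rt_norm2; auto. Qed.

Lemma ballR x e y : ball x e y <-> Rabs (y - x) < e.
Proof. unfold ball; simpl. unfold AbsRing_ball, abs, minus, plus, opp; simpl. tauto. Qed.

Lemma loc_ex (P : R -> Prop) a : locally a P -> exists d, 0 < d /\ forall s, Rabs (s - a) < d -> P s.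
Proof. intros [eps H]. exists eps. split. apply cond_pos. intros s Hs. apply H. apply ballR. auto. Qed.

Lemma right_ex (P : R -> Prop) a : at_right a P -> exists d, 0 < d /\ forall s, a < s < a + d -> P s.
Proof. intros H. apply loc_ex in H. destruct H as [d [Hd H]]. exists d. split; auto.
 intros s Hs. apply H. rewrite Rabs_right; lra. lra. Qed.

Lemma lim_lt {T} {F : (T -> Prop) -> Prop} {FF : Filter F} (g : T -> R) l c :
  filterlim g F (locally l) -> l < c -> F (fun s => g s < c).
Proof.
 intros H Hl. assert (He : 0 < c - l) by lra.
 eapply filter_imp. 2: apply H; apply (locally_ball l (mkposreal _ He)).
 intros s Hs. apply ballR in Hs. simpl in Hs. apply Rabs_def2 in Hs. destruct Hs as [H0 H1]. unfold minus, plus, opp in H0, H1; simpl in H0, H1. lra.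
Qed.
Lemma lim_gt {T} {F : (T -> Prop) -> Prop} {FF : Filter F} (g : T -> R) l c :
  filterlim g F (locally l) -> c < l -> F (fun s => c < g s).
Proof.
 intros H Hl. assert (He : 0 < l - c) by lra.
 eapply filter_imp. 2: apply H; apply (locally_ball l (mkposreal _ He)).
 intros s Hs. apply ballR in Hs. simpl in Hs. apply Rabs_def2 in Hs. destruct Hs as [H0 H1]. unfold minus, plus, opp in H0, H1; simpl in H0, H1. lra.
Qed.

Lemma loc_to_right (f : R -> R) a l : filterlim f (locally a) (locally l) -> filterlim f (at_right a) (locally l).
Proof. intros H. eapply filterlim_filter_le_1. 2: exact H. apply filter_le_within. Qed.

Lemma der_cont (f : R -> R) s d : is_derive f s d -> filterlim f (locally s) (locally (f s)).
Proof. intros H. apply (ex_derive_continuous f s). exists d. auto. Qed.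

Lemma mono_le (f : R -> R) a b :
  (forall s, a < s < b -> exists d, is_derive f s d /\ d <= 0) ->
  filterlim f (at_right a) (locally (f a)) -> forall s, a < s < b -> f s <= f a.
Proof.
 intros Hd Hc s Hs.
 assert (Hus : forall u, a < u < s -> f s <= f u).
 { intros u Hu.
   destruct (MVT_gen f u s (Derive f)) as [c [Hc1 Hc2]].
   - intros y Hy. rewrite Rmin_left in Hy by lra. rewrite Rmax_right in Hy by lra.
     destruct (Hd y ltac:(lra)) as [d [H1 H2]]. rewrite (is_derive_unique f y d H1). auto.
   - intros y Hy. rewrite Rmin_left in Hy by lra. rewrite Rmax_right in Hy by lra.
     destruct (Hd y ltac:(lra)) as [d [H1 H2]]. apply continuity_pt_filterlim. eapply der_cont; eauto.
   - rewrite Rmin_left in Hc1 by lra. rewrite Rmax_right in Hc1 by lra.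
     destruct (Hd c ltac:(lra)) as [d [H1 H2]]. rewrite (is_derive_unique f c d H1) in Hc2. nra. }
 destruct (Rle_lt_dec (f s) (f a)) as [|Hlt]; auto. exfalso.
 assert (Hev : at_right a (fun u => f u < f s)) by (apply (lim_lt f (f a)); auto).
 apply right_ex in Hev. destruct Hev as [d [Hd0 Hev]].
 set (u := a + Rmin (d/2) ((s - a)/2)).
 assert (a < u < s /\ u < a + d). { unfold u. pose proof (Rmin_l (d/2) ((s-a)/2)). pose proof (Rmin_r (d/2) ((s-a)/2)).
   assert (0 < Rmin (d/2) ((s-a)/2)) by (apply Rmin_glb_lt; lra). lra. }
 specialize (Hev u ltac:(lra)). specialize (Hus u ltac:(lra)). lra.
Qed.

Lemma psi0_pos psi : admissible_psi psi -> 0 < psi 0.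
Proof.
 intros [dpsi [Hd [_ [Hnn [Hdec [H2 Hd2]]]]]].
 assert (Hin : in02 2) by (unfold in02; lra).
 specialize (Hd 2 Hin).
 assert (Hev : within (fun r => in02 r /\ r <> 2) (locally 2) (fun r => (psi r - psi 2) / (r - 2) < 0)).
 { apply (lim_lt (fun r => (psi r - psi 2) / (r - 2)) (dpsi 2)); auto. }
 unfold within in Hev. apply loc_ex in Hev. destruct Hev as [d [Hd0 Hev]].
 set (r := 2 - Rmin (d/2) 1).
 assert (0 < Rmin (d/2) 1) by (apply Rmin_glb_lt; lra).
 pose proof (Rmin_l (d/2) 1). pose proof (Rmin_r (d/2) 1).
 assert (Hr : in02 r /\ r <> 2) by (unfold in02, r; lra).
 specialize (Hev r ltac:(unfold r; rewrite Rabs_left; lra) Hr).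
 rewrite H2 in Hev.
 assert (0 < psi r).
 { assert (r - 2 < 0) by (unfold r; lra).
   apply Rnot_le_lt. intros Hle. assert (0 <= (psi r - 0) / (r - 2)).
   { unfold Rdiv. replace ((psi r - 0) * / (r - 2)) with ((- psi r) * / (- (r - 2))) by (field; lra).
     apply Rmult_le_pos. lra. left. apply Rinv_0_lt_compat. lra. }
   lra. }
 assert (psi r <= psi 0) by (apply Hdec; unfold in02, r in *; lra). lra.
Qed.

Lemma abs_div_pos a u : 0 < u -> Rabs (a / u) = Rabs a / u.
Proof. intros. unfold Rdiv. rewrite Rabs_mult, (Rabs_right (/ u)). auto. left; apply Rinv_0_lt_compat; auto. Qed.

Lemma div_le_helper a b d : 0 < d -> a <= b * d -> a / d <= b.
Proof. intros. apply (Rmult_le_reg_r d); auto. unfold Rdiv. rewrite Rmult_assoc, Rinv_l by lra. lra. Qed.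

Lemma vnorm_unit a : dot a a = 1 -> vnorm a = 1.
Proof. intros. unfold vnorm. rewrite H. apply sqrt_1. Qed.

Lemma dotabs_le a b A B : vnorm a <= A -> vnorm b <= B -> Rabs (dot a b) <= A * B.
Proof. intros. pose proof (cs a b). pose proof (vnorm_ge0 a). pose proof (vnorm_ge0 b).
 assert (vnorm a * vnorm b <= A * B) by (apply Rmult_le_compat; lra). lra. Qed.

Lemma vadd_le a b A B : vnorm a <= A -> vnorm b <= B -> vnorm (vadd a b) <= A + B.
Proof. intros. pose proof (vnorm_add a b). lra. Qed.

Lemma Eterm_bound y x w y' x' V :
 dot x x = 1 -> dot y y = 1 -> dot y y' = 0 -> dot x x' = 0 -> 0 <= V ->
 vnorm w <= V -> vnorm y' <= V -> vnorm x' <= V -> 0 < 1 + dot y x ->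
 vnorm (Eterm y x w y' x') <= 8 * V^2 + 16 * V^2 / vnorm (vadd x y).
Proof.
 intros Hx Hy Hyy Hxx HV Hw Hy' Hx' Hu.
 pose proof (vnorm_unit x Hx) as nx. pose proof (vnorm_unit y Hy) as ny.
 set (c := dot y x) in *. set (s := vnorm (vadd x y)). set (k := cross y x).
 set (kd := vadd (cross y' x) (cross y x')). set (p := dot k w). set (cd := dot y' x + dot y x').
 set (u := 1 + c) in *. set (kn := vnorm k).
 assert (Hs2 : s * s = 2 * u).
 { unfold s. rewrite vnorm_sq'. replace (dot (vadd x y) (vadd x y)) with (dot x x + 2 * dot y x + dot y y) by (vdes; vunf; ring).
   unfold u, c. lra. }
 assert (Hs0 : 0 <= s) by apply vnorm_ge0.
 assert (Hs : 0 < s) by nra.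
 assert (Hkn2 : kn * kn = (1 - c) * u) by (unfold kn, k; rewrite vnorm_sq'; apply sphere_cross; auto).
 pose proof (sphere_c_bounds x y Hx Hy) as Hcb. fold c in Hcb.
 assert (Hkn0 : 0 <= kn) by apply vnorm_ge0.
 assert (Hkn2' : kn * kn <= 2 * u) by nra.
 assert (Hkns : kn <= s) by nra.
 assert (Hu2 : u <= 2) by (unfold u; lra). assert (Hs2' : s <= 2) by (destruct (Rle_lt_dec s 2); auto; nra).
 assert (Hcd : Rabs cd <= 2 * V * s).
 { replace cd with (dot y' (vadd x y) + dot (vadd x y) x') by (unfold cd; rewrite (dot_comm y y') in Hyy; revert Hyy Hxx; vdes; vunf; intros; nra).
   eapply Rle_trans. apply Rabs_triang.
   pose proof (dotabs_le y' (vadd x y) V s Hy' (Rle_refl _)). pose proof (dotabs_le (vadd x y) x' s V (Rle_refl _) Hx'). lra. }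
 assert (Hkd : vnorm kd <= 2 * V).
 { unfold kd. eapply Rle_trans. apply vnorm_add. pose proof (vnorm_cross y' x). pose proof (vnorm_cross y x'). rewrite nx in *. rewrite ny in *. lra. }
 assert (Hp : Rabs p <= kn * V) by (apply dotabs_le; [apply Rle_refl | auto]).
 assert (Hp0 : 0 <= Rabs p) by apply Rabs_pos.
 assert (Hcd0 : 0 <= Rabs cd) by apply Rabs_pos.
 unfold Eterm. fold c k kd p cd u.
 assert (V2 : forall a b, vnorm a <= V -> vnorm b <= V -> Rabs (dot a b) <= V * V) by (intros; apply dotabs_le; auto).
 assert (T1 : vnorm (vscal cd w) <= 4 * V ^ 2).
 { rewrite vnorm_scal. pose proof (vnorm_ge0 w). assert (Rabs cd * vnorm w <= (2 * V * s) * V) by (apply Rmult_le_compat; auto). assert (0 <= V * V) by nra. assert (0 <= V * V * (2 - s)) by (apply Rmult_le_pos; lra). assert (2 * V * s * V <= 4 * V ^ 2) by nra. lra. }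
 assert (T2 : vnorm (vscal (- dot x' w) y) <= V ^ 2).
 { rewrite vnorm_scal, ny, Rabs_Ropp. pose proof (V2 x' w Hx' Hw). lra. }
 assert (T3 : vnorm (vscal (- dot x w) y') <= V ^ 2).
 { rewrite vnorm_scal, Rabs_Ropp. pose proof (dotabs_le x w 1 V ltac:(lra) Hw). pose proof (vnorm_ge0 y').
   assert (Rabs (dot x w) * vnorm y' <= (1 * V) * V) by (apply Rmult_le_compat; auto; apply Rabs_pos). nra. }
 assert (T4 : vnorm (vscal (dot y' w) x) <= V ^ 2).
 { rewrite vnorm_scal, nx. pose proof (V2 y' w Hy' Hw). lra. }
 assert (T5 : vnorm (vscal (dot y w) x') <= V ^ 2).
 { rewrite vnorm_scal. pose proof (dotabs_le y w 1 V ltac:(lra) Hw). pose proof (vnorm_ge0 x').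
   assert (Rabs (dot y w) * vnorm x' <= (1 * V) * V) by (apply Rmult_le_compat; auto; apply Rabs_pos). nra. }
 assert (T6 : vnorm (vscal (dot kd w / u) k) <= 4 * V ^ 2 / s).
 { rewrite vnorm_scal, abs_div_pos by auto. fold kn.
   pose proof (dotabs_le kd w (2 * V) V Hkd Hw) as Hq. pose proof (Rabs_pos (dot kd w)).
   replace (Rabs (dot kd w) / u * kn) with ((Rabs (dot kd w) * kn) / u) by (field; lra).
   apply div_le_helper; auto.
   replace (4 * V ^ 2 / s * u) with (2 * V * V * s) by (replace u with (s * s / 2) by lra; field; lra).
   apply Rmult_le_compat; auto. }
 assert (T7 : vnorm (vscal (- (p * cd) / u ^ 2) k) <= 8 * V ^ 2 / s).
 { rewrite vnorm_scal, abs_div_pos by (apply pow_lt; auto). rewrite Rabs_Ropp, Rabs_mult. fold kn.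
   replace (Rabs p * Rabs cd / u ^ 2 * kn) with ((Rabs p * Rabs cd * kn) / u ^ 2) by (field; lra).
   apply div_le_helper. apply pow_lt; auto.
   replace (8 * V ^ 2 / s * u ^ 2) with (2 * V * V * s * s * s) by (replace u with (s * s / 2) by lra; field; lra).
   assert (Rabs p * Rabs cd <= (kn * V) * (2 * V * s)) by (apply Rmult_le_compat; auto).
   assert (Rabs p * Rabs cd * kn <= (kn * V) * (2 * V * s) * kn) by (apply Rmult_le_compat_r; auto).
   assert (0 <= V * V * s) by (apply Rmult_le_pos; nra).
   nra. }
 assert (T8 : vnorm (vscal (p / u) kd) <= 4 * V ^ 2 / s).
 { rewrite vnorm_scal, abs_div_pos by auto.
   replace (Rabs p / u * vnorm kd) with ((Rabs p * vnorm kd) / u) by (field; lra).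
   apply div_le_helper; auto.
   replace (4 * V ^ 2 / s * u) with (2 * V * V * s) by (replace u with (s * s / 2) by lra; field; lra).
   pose proof (vnorm_ge0 kd).
   assert (Rabs p * vnorm kd <= (kn * V) * (2 * V)) by (apply Rmult_le_compat; auto).
   assert (0 <= V * V) by nra. assert (V * V * kn <= V * V * s) by (apply Rmult_le_compat_l; auto). lra. }
 eapply Rle_trans.
 apply (vadd_le _ _ ((4 * V^2 + V^2) + (V^2 + V^2)) ((V^2 + 4 * V^2 / s) + (8 * V^2 / s + 4 * V^2 / s)));
   repeat apply vadd_le; auto.
 right. field. lra.
Qed.

Lemma der_rsum (f : nat -> R -> R) (df : nat -> R) n s :
  (forall k, (k < n)%nat -> is_derive (f k) s (df k)) ->
  is_derive (fun s => rsum (fun k => f k s) n) s (rsum df n).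
Proof. induction n; simpl; intros. apply der_const. apply der_add; auto. Qed.

Lemma rot_dot x1 x2 w : x1 <> vopp x2 ->
  exists m, (m = 1 \/ m = dot x2 x2) /\ dot x2 (rot x1 x2 w) = dot x1 w * m.
Proof.
 intros H. unfold rot.
 destruct (excluded_middle_informative (x1 = x2)) as [E|E].
 { exists 1. split; auto. subst. ring. }
 destruct (excluded_middle_informative (x1 = vopp x2)) as [E'|E']. contradiction.
 exists (dot x2 x2). split; auto. cbv zeta.
 set (u := vscal (/ vnorm (cross x1 x2)) (cross x1 x2)).
 assert (dot x2 u = 0) by (unfold u; vdes; vunf; ring).
 rewrite !dot_add_r, !dot_scal_r, H0. rewrite (dot_comm x2 x1). ring.
Qed.

Lemma dot_vscal_self r a : dot a (vscal r a) = r * dot a a.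
Proof. apply dot_scal_r. Qed.

Lemma dot_x_accel N sigma psi x v i s :
  dot (x i s) (x i s) <> 0 ->
  dot (x i s) (accel N sigma psi x v i s) =
  - dot (v i s) (v i s) +
  rsum (fun j => psiij psi x i j s / INR N * (dot (x i s) (rot (x j s) (x i s) (v j s)) - dot (x i s) (v i s))) N.
Proof.
 intros Hb. unfold accel. rewrite !dot_add_r, dot_scal_r, !vsum_dot.
 rewrite !vnorm_sq.
 replace (rsum (fun k => dot (x i s) (vscal (sigma / INR N) (vsub (vscal (dot (x i s) (x i s)) (x k s)) (vscal (dot (x i s) (x k s)) (x i s))))) N) with 0.
 2:{ rewrite <- (rsum_zero N). apply rsum_ext. intros. rewrite dot_scal_r, dot_sub_r, !dot_scal_r. ring. }
 replace (rsum (fun j => dot (x i s) (vscal (psiij psi x i j s / INR N) (vsub (rot (x j s) (x i s) (v j s)) (v i s)))) N)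
   with (rsum (fun j => psiij psi x i j s / INR N * (dot (x i s) (rot (x j s) (x i s) (v j s)) - dot (x i s) (v i s))) N).
 2:{ apply rsum_ext. intros. rewrite dot_scal_r, dot_sub_r. ring. }
 field. auto.
Qed.

Section Inv.
Variables (N : nat) (sigma : R) (psi : R -> R) (x v : nat -> R -> vec).
Hypothesis HN : (1 <= N)%nat.
Hypothesis Hsol : is_solution N sigma psi x v.
Hypothesis Hinit : forall i, (i < N)%nat -> vnorm (x i 0) = 1 /\ dot (v i 0) (x i 0) = 0.
Hypothesis Hopp : forall i j t, (i<N)%nat -> (j<N)%nat -> 0 <= t -> x i t <> vopp (x j t).
Hypothesis Hpsinn : forall s, in02 s -> 0 <= psi s.
Hypothesis Hpsidec : forall a b, in02 a -> in02 b -> a <= b -> psi b <= psi a.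

Definition aa i s := dot (x i s) (v i s).
Definition bb i s := dot (x i s) (x i s).
Definition QQ s := rsum (fun i => aa i s * aa i s + (bb i s - 1) * (bb i s - 1)) N.

Lemma xder i s : (i < N)%nat -> 0 < s -> vder (x i) s (v i s).
Proof. intros. apply vder_of. apply (Hsol i H). auto. Qed.
Lemma vder' i s : (i < N)%nat -> 0 < s -> vder (v i) s (accel N sigma psi x v i s).
Proof. intros. apply vder_of. apply (Hsol i H). auto. Qed.

Lemma QQ_der s : 0 < s -> is_derive QQ s
  (rsum (fun i => 2 * aa i s * (dot (v i s) (v i s) + dot (x i s) (accel N sigma psi x v i s)) + 2 * (bb i s - 1) * (2 * aa i s)) N).
Proof.
 intros Hs. unfold QQ. apply der_rsum. intros i Hi.
 assert (Ha : is_derive (aa i) s (dot (v i s) (v i s) + dot (x i s) (accel N sigma psi x v i s))).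
 { unfold aa. apply dot_der. apply xder; auto. apply vder'; auto. }
 assert (Hb : is_derive (bb i) s (2 * aa i s)).
 { unfold bb. eapply der_eq. apply dot_der; apply xder; auto. unfold aa. rewrite (dot_comm (v i s)). ring. }
 eapply der_eq. apply der_add. apply der_mul; exact Ha. apply der_mul; apply der_sub; try exact Hb; apply der_const.
 cbv beta; ring.
Qed.

Lemma QQ_ge0 s : 0 <= QQ s.
Proof. unfold QQ. apply rsum_nonneg. intros k _; cbv beta. pose proof (Rle_0_sqr (aa k s)); pose proof (Rle_0_sqr (bb k s - 1)); unfold Rsqr in *; lra. Qed.

Lemma QQ_term s i : (i < N)%nat -> aa i s * aa i s + (bb i s - 1) * (bb i s - 1) <= QQ s.
Proof. intros. unfold QQ. apply (rsum_single (fun i => aa i s * aa i s + (bb i s - 1) * (bb i s - 1))); auto. intros k _; cbv beta. pose proof (Rle_0_sqr (aa k s)); pose proof (Rle_0_sqr (bb k s - 1)); unfold Rsqr in *; lra. Qed.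

Lemma QQ_zero s : QQ s = 0 -> forall i, (i < N)%nat -> aa i s = 0 /\ bb i s = 1.
Proof. intros H i Hi. pose proof (QQ_term s i Hi). rewrite H in H0. pose proof (Rle_0_sqr (aa i s)); pose proof (Rle_0_sqr (bb i s - 1)); unfold Rsqr in *. assert (aa i s * aa i s = 0) by lra. assert ((bb i s - 1) * (bb i s - 1) = 0) by lra. split. apply Rmult_integral in H3; tauto. apply Rmult_integral in H4; destruct H4; lra. Qed.

Lemma QQ_der_bound s P : 0 < s -> 0 <= P ->
  (forall i, (i < N)%nat -> 1/2 < bb i s < 3/2) ->
  (forall i j, (i < N)%nat -> (j < N)%nat -> 0 <= psiij psi x i j s <= P) ->
  rsum (fun i => 2 * aa i s * (dot (v i s) (v i s) + dot (x i s) (accel N sigma psi x v i s)) + 2 * (bb i s - 1) * (2 * aa i s)) N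
  <= INR N * (4 * P + 2) * QQ s.
Proof.
 intros Hs HP Hb Hpsi.
 assert (HNpos : 0 < INR N) by (apply lt_0_INR; lia).
 replace (INR N * (4 * P + 2) * QQ s) with (rsum (fun _ => 4 * P * QQ s + 2 * QQ s) N) by (rewrite rsum_const; ring).
 apply rsum_le. intros i Hi.
 assert (Hbi : bb i s <> 0) by (specialize (Hb i Hi); lra).
 unfold bb in Hbi. rewrite dot_x_accel by auto.
 pose proof (QQ_term s i Hi) as Ti.
 assert (H1 : 2 * (bb i s - 1) * (2 * aa i s) <= 2 * QQ s) by (pose proof (Rle_0_sqr (aa i s - (bb i s - 1))); unfold Rsqr in *; nra).
 assert (H2 : 2 * aa i s * (dot (v i s) (v i s) + (- dot (v i s) (v i s) + rsum (fun j => psiij psi x i j s / INR N * (dot (x i s) (rot (x j s) (x i s) (v j s)) - dot (x i s) (v i s))) N)) <= 4 * P * QQ s).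
 { replace (2 * aa i s * (dot (v i s) (v i s) + (- dot (v i s) (v i s) + rsum (fun j => psiij psi x i j s / INR N * (dot (x i s) (rot (x j s) (x i s) (v j s)) - dot (x i s) (v i s))) N)))
    with (rsum (fun j => 2 * aa i s * (psiij psi x i j s / INR N * (dot (x i s) (rot (x j s) (x i s) (v j s)) - dot (x i s) (v i s)))) N)
    by (rewrite rsum_scal; ring).
   replace (4 * P * QQ s) with (rsum (fun _ => P / INR N * (4 * QQ s)) N) by (rewrite rsum_const; field; lra).
   apply rsum_le. intros j Hj.
   destruct (rot_dot (x j s) (x i s) (v j s)) as [m [Hm Hd]]. apply Hopp; auto; lra.
   rewrite Hd. fold (aa i s). replace (dot (x j s) (v j s)) with (aa j s) by auto.
   pose proof (QQ_term s j Hj) as Tj. pose proof (QQ_ge0 s).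
   specialize (Hpsi i j Hi Hj).
   assert (Hm2 : Rabs m <= 2). { destruct Hm; subst. rewrite Rabs_R1; lra. specialize (Hb i Hi). unfold bb in Hb. rewrite Rabs_right; lra. }
   assert (Hq : aa i s * aa j s * m <= 2 * QQ s).
   { assert (Rabs (aa i s * aa j s) <= QQ s).
     { apply Rsqr_incr_0_var. rewrite <- Rsqr_abs. unfold Rsqr. assert (aa i s * aa i s <= QQ s) by (pose proof (Rle_0_sqr (bb i s - 1)); unfold Rsqr in *; lra). assert (aa j s * aa j s <= QQ s) by (pose proof (Rle_0_sqr (bb j s - 1)); unfold Rsqr in *; lra). replace (aa i s * aa j s * (aa i s * aa j s)) with ((aa i s * aa i s) * (aa j s * aa j s)) by ring. apply Rmult_le_compat; try lra; apply Rle_0_sqr. auto. }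
     pose proof (Rle_abs (aa i s * aa j s * m)) as Ra. rewrite Rabs_mult in Ra. pose proof (Rabs_pos m). pose proof (Rabs_pos (aa i s * aa j s)). assert (Rabs (aa i s * aa j s) * Rabs m <= QQ s * 2) by (apply Rmult_le_compat; lra). lra. }
   assert (0 <= psiij psi x i j s / INR N) by (apply Rdiv_le_0_compat; lra).
   assert (psiij psi x i j s / INR N <= P / INR N) by (apply Rmult_le_compat_r; [left; apply Rinv_0_lt_compat; lra | lra]).
   assert (Hin : 2 * aa i s * (aa j s * m - aa i s) <= 4 * QQ s) by nra.
   replace (2 * aa i s * (psiij psi x i j s / INR N * (aa j s * m - aa i s))) with (psiij psi x i j s / INR N * (2 * aa i s * (aa j s * m - aa i s))) by ring.
   assert (0 <= 4 * QQ s) by lra.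
   destruct (Rle_lt_dec 0 (2 * aa i s * (aa j s * m - aa i s))); nra. }
 lra.
Qed.


Lemma xlim_right i T : (i < N)%nat -> 0 <= T -> filterlim (x i) (at_right T) (locally (x i T)).
Proof.
 intros Hi HT. destruct (Req_dec T 0) as [->|HT0]. apply (Hsol i Hi).
 eapply filterlim_filter_le_1. apply filter_le_within.
 apply (@ex_derive_continuous R_AbsRing _ (x i) T). exists (v i T). apply (Hsol i Hi). lra.
Qed.
Lemma vlim_right i T : (i < N)%nat -> 0 <= T -> filterlim (v i) (at_right T) (locally (v i T)).
Proof.
 intros Hi HT. destruct (Req_dec T 0) as [->|HT0]. apply (Hsol i Hi).
 eapply filterlim_filter_le_1. apply filter_le_within.
 apply (@ex_derive_continuous R_AbsRing _ (v i) T). exists (accel N sigma psi x v i T). apply (Hsol i Hi). lra.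
Qed.

Lemma QQ_right T : 0 <= T -> filterlim QQ (at_right T) (locally (QQ T)).
Proof.
 intros HT. unfold QQ, aa, bb.
 apply (lim_rsum (fun k s => dot (x k s) (v k s) * dot (x k s) (v k s) + (dot (x k s) (x k s) - 1) * (dot (x k s) (x k s) - 1))).
 intros k Hk. pose proof (xlim_right k T Hk HT). pose proof (vlim_right k T Hk HT).
 apply lim_add; apply lim_mul; try apply lim_sub; try apply lim_dot; auto; apply lim_cst.
Qed.

Lemma QQ_init : QQ 0 = 0.
Proof.
 unfold QQ. transitivity (rsum (fun _ => 0) N); [| apply rsum_zero]. apply rsum_ext. intros i Hi.
 destruct (Hinit i Hi) as [H1 H2]. unfold aa, bb. cbv beta. rewrite (dot_comm (x i 0) (v i 0)), H2.
 rewrite <- vnorm_sq, H1. ring.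
Qed.

Lemma dsub_expand a b : dot (vsub a b) (vsub a b) = dot a a - 2 * dot a b + dot b b.
Proof. vdes; vunf; ring. Qed.

Lemma extend T : 0 <= T -> QQ T = 0 -> exists d, 0 < d /\ forall s, T < s < T + d -> QQ s = 0.
Proof.
 intros HT QT.
 set (P := psi 0).
 assert (HP : 0 <= P) by (apply Hpsinn; unfold in02; lra).
 assert (Hb : at_right T (fun s => forall i, (i < N)%nat -> 1/2 < bb i s < 3/2)).
 { apply ev_forall. intros i Hi. destruct (QQ_zero T QT i Hi) as [_ Hbi].
   assert (L : filterlim (bb i) (at_right T) (locally (bb i T))) by (unfold bb; apply lim_dot; apply xlim_right; auto).
   apply filter_and. apply (lim_gt (bb i) (bb i T)); auto; lra. apply (lim_lt (bb i) (bb i T)); auto; lra. }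
 assert (Hd : at_right T (fun s => forall i, (i < N)%nat -> forall j, (j < N)%nat ->
           dot (vsub (x i s) (x j s)) (vsub (x i s) (x j s)) < 4)).
 { apply ev_forall. intros i Hi. apply ev_forall. intros j Hj.
   destruct (QQ_zero T QT i Hi) as [_ Hbi]. destruct (QQ_zero T QT j Hj) as [_ Hbj].
   unfold bb in Hbi, Hbj.
   assert (L : filterlim (fun s => dot (vsub (x i s) (x j s)) (vsub (x i s) (x j s))) (at_right T)
          (locally (dot (x i T) (x i T) - 2 * dot (x i T) (x j T) + dot (x j T) (x j T)))).
   { apply (filterlim_ext (fun s => dot (x i s) (x i s) - 2 * dot (x i s) (x j s) + dot (x j s) (x j s))). intros s. symmetry. apply dsub_expand.
     apply lim_add. apply lim_sub. apply lim_dot; apply xlim_right; auto.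
     apply lim_mul. apply lim_cst. apply lim_dot; apply xlim_right; auto.
     apply lim_dot; apply xlim_right; auto. }
   apply (lim_lt _ _ _ L).
   pose proof (sphere_neq_opp (x j T) (x i T) Hbj Hbi (Hopp i j T Hi Hj HT)).
   pose proof (sphere_c_bounds (x j T) (x i T) Hbj Hbi). lra. }
 pose proof (filter_and _ _ Hb Hd) as Hev. apply right_ex in Hev. destruct Hev as [d [Hd0 Hev]].
 exists d. split; auto.
 set (K := INR N * (4 * P + 2)).
 set (G := fun s => QQ s * exp (- K * s)).
 assert (HG : forall s, T < s < T + d -> G s <= G T).
 { apply mono_le.
   - intros s Hs. destruct (Hev s Hs) as [Hbs Hds].
     assert (Hs0 : 0 < s) by lra.
     exists (rsum (fun i => 2 * aa i s * (dot (v i s) (v i s) + dot (x i s) (accel N sigma psi x v i s)) + 2 * (bb i s - 1) * (2 * aa i s)) N * exp (- K * s) + QQ s * ((- K) * exp (- K * s))).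
     split.
     + unfold G. apply (der_mul QQ (fun s => exp (- K * s))). apply QQ_der; auto.
       apply (is_derive_comp exp (fun s => - K * s)). apply is_derive_exp.
       eapply der_eq. apply der_mul. apply der_const. apply der_id. cbv beta; ring.
     + assert (Hbd : rsum (fun i => 2 * aa i s * (dot (v i s) (v i s) + dot (x i s) (accel N sigma psi x v i s)) + 2 * (bb i s - 1) * (2 * aa i s)) N <= K * QQ s).
       { unfold K. apply QQ_der_bound; auto.
         intros i j Hi Hj. unfold psiij.
         specialize (Hds i Hi j Hj).
         assert (Hin : in02 (vnorm (vsub (x i s) (x j s)))).
         { split. apply vnorm_ge0. apply vnorm_le; lra. }
         split. apply Hpsinn; auto. apply Hpsidec; auto. unfold in02; lra. apply Hin. }
       pose proof (exp_pos (- K * s)). nra.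
   - unfold G. apply (lim_mul QQ (fun s => exp (- K * s))). apply QQ_right; auto.
     apply (loc_to_right (fun s => exp (- K * s))). apply (der_cont (fun s => exp (- K * s)) T (scal (- K) (exp (- K * T)))). apply (is_derive_comp exp (fun s => - K * s)). apply is_derive_exp.
       eapply der_eq. apply der_mul. apply der_const. apply der_id. cbv beta; ring. }
 intros s Hs. specialize (HG s Hs). unfold G in HG. rewrite QT in HG.
 pose proof (exp_pos (- K * s)). pose proof (QQ_ge0 s).
 assert (QQ s * exp (- K * s) <= 0) by lra. nra.
Qed.

Lemma inv_all : forall s, 0 <= s -> QQ s = 0.
Proof.
 apply NNPP. intros Hn. apply not_all_ex_not in Hn. destruct Hn as [r0 Hr0].
 apply imply_to_and in Hr0. destruct Hr0 as [Hr0 Hr0'].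
 set (E := fun r => 0 <= r /\ forall s, 0 <= s <= r -> QQ s = 0).
 assert (Hbd : forall r, E r -> r < r0).
 { intros r [Hr Hg]. destruct (Rlt_le_dec r r0); auto. exfalso. apply Hr0'. apply Hg. lra. }
 assert (HE0 : E 0). { split. lra. intros s Hs. replace s with 0 by lra. apply QQ_init. }
 destruct (completeness E) as [T [HT1 HT2]].
 { exists r0. intros r Hr. left. apply Hbd; auto. }
 { exists 0; auto. }
 assert (T0 : 0 <= T) by (apply HT1; auto).
 assert (Tr0 : T <= r0) by (apply HT2; intros r Hr; left; apply Hbd; auto).
 assert (Hlt : forall s, 0 <= s < T -> QQ s = 0).
 { intros s Hs. apply NNPP. intros Hq.
   assert (is_upper_bound E s).
   { intros r [Hr Hg]. destruct (Rle_lt_dec r s); auto. exfalso. apply Hq. apply Hg. lra. }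
   specialize (HT2 s H). lra. }
 assert (QT : QQ T = 0).
 { destruct (Req_dec T 0) as [->|HT0]. apply QQ_init.
   apply NNPP. intros Hq. pose proof (QQ_ge0 T).
   assert (Hc : filterlim QQ (locally T) (locally (QQ T))).
   { eapply der_cont. apply QQ_der. lra. }
   assert (Hev : locally T (fun s => 0 < QQ s)) by (apply (lim_gt QQ (QQ T)); auto; lra).
   apply loc_ex in Hev. destruct Hev as [d [Hd Hev]].
   set (s := T - Rmin (d/2) (T/2)).
   assert (0 < Rmin (d/2) (T/2)) by (apply Rmin_glb_lt; lra).
   pose proof (Rmin_l (d/2) (T/2)). pose proof (Rmin_r (d/2) (T/2)).
   specialize (Hev s ltac:(unfold s; rewrite Rabs_left; lra)).
   rewrite Hlt in Hev. lra. unfold s; lra. }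
 destruct (extend T T0 QT) as [d [Hd Hext]].
 assert (E (T + d/2)).
 { split. lra. intros s Hs. destruct (Rlt_le_dec s T). apply Hlt; lra.
   destruct (Req_dec s T). subst; auto. apply Hext. lra. }
 specialize (HT1 _ H). lra.
Qed.

Lemma unit_all i s : (i < N)%nat -> 0 <= s -> dot (x i s) (x i s) = 1 /\ dot (x i s) (v i s) = 0.
Proof. intros Hi Hs. destruct (QQ_zero s (inv_all s Hs) i Hi). split; auto. Qed.


Hypothesis Hsym : forall i j t, (i<N)%nat -> (j<N)%nat -> 0 <= t -> psiij psi x i j t = psiij psi x j i t.

Definition Edot s := / INR N * rsum (fun k => dot (v k s) (v k s)) N
  + sigma / (2 * (INR N)^2) * rsum (fun k => rsum (fun l => dot (vsub (x k s) (x l s)) (vsub (x k s) (x l s))) N) N.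

Lemma energy_Edot s : energy N sigma x v s = Edot s.
Proof.
 unfold energy, Edot.
 rewrite (rsum_ext (fun k => vnorm (v k s) ^ 2) (fun k => dot (v k s) (v k s))) by (intros; apply vnorm_sq).
 rewrite (rsum_ext (fun k => rsum (fun l => vnorm (vsub (x k s) (x l s)) ^ 2) N) (fun k => rsum (fun l => dot (vsub (x k s) (x l s)) (vsub (x k s) (x l s))) N)).
 auto. intros; apply rsum_ext; intros; apply vnorm_sq.
Qed.

Lemma dist_in02 k l s : (k < N)%nat -> (l < N)%nat -> 0 <= s -> in02 (vnorm (vsub (x k s) (x l s))).
Proof.
 intros Hk Hl Hs. destruct (unit_all k s Hk Hs) as [Hk1 _]. destruct (unit_all l s Hl Hs) as [Hl1 _].
 split. apply vnorm_ge0. apply vnorm_le. lra. rewrite dsub_expand.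
 pose proof (sphere_c_bounds (x k s) (x l s) Hk1 Hl1). rewrite (dot_comm (x k s) (x l s)). lra.
Qed.

Lemma psi_nn k l s : (k < N)%nat -> (l < N)%nat -> 0 <= s -> 0 <= psiij psi x k l s.
Proof. intros. unfold psiij. apply Hpsinn. apply dist_in02; auto. Qed.

Lemma rot_norm2 j k s w : (j < N)%nat -> (k < N)%nat -> 0 <= s ->
  dot (rot (x j s) (x k s) w) (rot (x j s) (x k s) w) = dot w w.
Proof.
 intros Hj Hk Hs. destruct (unit_all k s Hk Hs) as [Hk1 _]. destruct (unit_all j s Hj Hs) as [Hj1 _].
 rewrite rot_Rt; auto. apply Rt_norm2; auto. apply sphere_neq_opp; auto. all: try (apply Hopp; auto).
Qed.

Lemma Edot_der s : 0 < s -> is_derive Edot s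
  (/ INR N * rsum (fun k => 2 * dot (v k s) (accel N sigma psi x v k s)) N
  + sigma / (2 * (INR N)^2) * rsum (fun k => rsum (fun l => 2 * dot (vsub (x k s) (x l s)) (vsub (v k s) (v l s))) N) N).
Proof.
 intros Hs. unfold Edot.
 assert (H1 : is_derive (fun s => rsum (fun k => dot (v k s) (v k s)) N) s (rsum (fun k => 2 * dot (v k s) (accel N sigma psi x v k s)) N)).
 { apply (der_rsum (fun k s => dot (v k s) (v k s))). intros k Hk. eapply der_eq. apply dot_der; apply vder'; auto.
   rewrite (dot_comm (accel N sigma psi x v k s) (v k s)). ring. }
 assert (H2 : is_derive (fun s => rsum (fun k => rsum (fun l => dot (vsub (x k s) (x l s)) (vsub (x k s) (x l s))) N) N) s
     (rsum (fun k => rsum (fun l => 2 * dot (vsub (x k s) (x l s)) (vsub (v k s) (v l s))) N) N)).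
 { apply (der_rsum (fun k s => rsum (fun l => dot (vsub (x k s) (x l s)) (vsub (x k s) (x l s))) N)).
   intros k Hk. apply (der_rsum (fun l s => dot (vsub (x k s) (x l s)) (vsub (x k s) (x l s)))). intros l Hl.
   eapply der_eq. apply dot_der; apply vder_sub; apply xder; auto.
   rewrite (dot_comm (vsub (v k s) (v l s))). ring. }
 apply der_add; (eapply der_eq; [apply der_mul; [apply der_const| eassumption] | cbv beta; ring]).
Qed.

Lemma Edot_der_le s : 0 < s ->
  / INR N * rsum (fun k => 2 * dot (v k s) (accel N sigma psi x v k s)) N
  + sigma / (2 * (INR N)^2) * rsum (fun k => rsum (fun l => 2 * dot (vsub (x k s) (x l s)) (vsub (v k s) (v l s))) N) N <= 0.
Proof.
 intros Hs. assert (Hs0 : 0 <= s) by lra.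
 assert (HNpos : 0 < INR N) by (apply lt_0_INR; lia).
 set (P := fun k => rsum (fun j => psiij psi x k j s / INR N * (dot (v k s) (rot (x j s) (x k s) (v j s)) - dot (v k s) (v k s))) N).
 set (S := rsum (fun k => rsum (fun l => dot (v k s) (x l s)) N) N).
 assert (H1 : rsum (fun k => 2 * dot (v k s) (accel N sigma psi x v k s)) N = 2 * rsum P N + 2 * (sigma / INR N) * S).
 { unfold S. rewrite <- rsum_scal, <- rsum_scal, <- rsum_plus. apply rsum_ext. intros k Hk.
   destruct (unit_all k s Hk Hs0) as [Hk1 Hk2].
   unfold accel. rewrite !dot_add_r, dot_scal_r, !vsum_dot. rewrite dot_comm, Hk2. unfold P.
   rewrite <- rsum_scal. rewrite (vnorm_sq (x k s)), Hk1.
   replace (rsum (fun k0 => dot (v k s) (vscal (sigma / INR N) (vsub (vscal (1) (x k0 s)) (vscal (dot (x k s) (x k0 s)) (x k s))))) N)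
     with (sigma / INR N * rsum (fun l => dot (v k s) (x l s)) N).
   2:{ rewrite <- rsum_scal. apply rsum_ext. intros l Hl. rewrite dot_scal_r, dot_sub_r, !dot_scal_r.
       rewrite (dot_comm (v k s) (x k s)), Hk2. ring. }
   replace (rsum (fun j => dot (v k s) (vscal (psiij psi x k j s / INR N) (vsub (rot (x j s) (x k s) (v j s)) (v k s)))) N)
     with (rsum (fun j => psiij psi x k j s / INR N * (dot (v k s) (rot (x j s) (x k s) (v j s)) - dot (v k s) (v k s))) N).
   2:{ apply rsum_ext. intros j Hj. rewrite dot_scal_r, dot_sub_r. ring. }
   rewrite (rsum_scal 2). field; lra. }
 assert (H2 : rsum (fun k => rsum (fun l => 2 * dot (vsub (x k s) (x l s)) (vsub (v k s) (v l s))) N) N = -4 * S).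
 { transitivity (rsum (fun k => rsum (fun l => -2 * dot (v k s) (x l s) + -2 * dot (v l s) (x k s)) N) N).
   { apply rsum_ext; intros k Hk; apply rsum_ext; intros l Hl.
     destruct (unit_all k s Hk Hs0) as [_ Hk2]. destruct (unit_all l s Hl Hs0) as [_ Hl2].
     replace (dot (vsub (x k s) (x l s)) (vsub (v k s) (v l s))) with
       (dot (x k s) (v k s) - dot (v l s) (x k s) - dot (v k s) (x l s) + dot (x l s) (v l s)) by (vdes; vunf; ring).
     rewrite Hk2, Hl2. ring. }
   transitivity (rsum (fun k => -2 * rsum (fun l => dot (v k s) (x l s)) N + -2 * rsum (fun l => dot (v l s) (x k s)) N) N).
   { apply rsum_ext; intros k Hk. rewrite <- !rsum_scal, <- rsum_plus. auto. }
   rewrite rsum_plus, !rsum_scal. unfold S. rewrite (rsum_swap (fun k l => dot (v l s) (x k s))). ring. }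
 assert (H3 : rsum P N <= 0).
 { unfold P.
   transitivity (rsum (fun k => rsum (fun j => psiij psi x k j s / INR N * ((dot (v j s) (v j s) - dot (v k s) (v k s)) / 2)) N) N).
   { apply rsum_le; intros k Hk; apply rsum_le; intros j Hj.
     apply Rmult_le_compat_l. apply Rdiv_le_0_compat; auto. apply psi_nn; auto.
     pose proof (dot_ge0 (vsub (v k s) (rot (x j s) (x k s) (v j s)))).
     replace (dot (vsub (v k s) (rot (x j s) (x k s) (v j s))) (vsub (v k s) (rot (x j s) (x k s) (v j s))))
       with (dot (v k s) (v k s) - 2 * dot (v k s) (rot (x j s) (x k s) (v j s)) + dot (rot (x j s) (x k s) (v j s)) (rot (x j s) (x k s) (v j s))) in H by (vdes; vunf; ring).
     rewrite rot_norm2 in H; auto. lra. }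
   right.
   transitivity (rsum (fun k => rsum (fun j => psiij psi x k j s / INR N / 2 * dot (v j s) (v j s)) N) N
               - rsum (fun k => rsum (fun j => psiij psi x k j s / INR N / 2 * dot (v k s) (v k s)) N) N).
   { rewrite <- rsum_minus. apply rsum_ext; intros k Hk. rewrite <- rsum_minus. apply rsum_ext; intros j Hj. field. lra. }
   rewrite (rsum_swap (fun k j => psiij psi x k j s / INR N / 2 * dot (v j s) (v j s))).
   replace (rsum (fun l => rsum (fun k => psiij psi x k l s / INR N / 2 * dot (v l s) (v l s)) N) N)
     with (rsum (fun k => rsum (fun j => psiij psi x k j s / INR N / 2 * dot (v k s) (v k s)) N) N).
   ring.
   apply rsum_ext; intros k Hk; apply rsum_ext; intros j Hj. rewrite Hsym; auto. }
 rewrite H1, H2.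
 replace (/ INR N * (2 * rsum P N + 2 * (sigma / INR N) * S) + sigma / (2 * INR N ^ 2) * (-4 * S))
   with (2 / INR N * rsum P N) by (field; lra).
 assert (0 < 2 / INR N) by (apply Rdiv_lt_0_compat; lra). nra.
Qed.

Lemma Edot_right : filterlim Edot (at_right 0) (locally (Edot 0)).
Proof.
 unfold Edot. apply lim_add; apply lim_mul; try apply lim_cst.
 - apply (lim_rsum (fun k s => dot (v k s) (v k s))). intros. apply lim_dot; apply vlim_right; auto; lra.
 - apply (lim_rsum (fun k s => rsum (fun l => dot (vsub (x k s) (x l s)) (vsub (x k s) (x l s))) N)).
   intros k Hk. apply (lim_rsum (fun l s => dot (vsub (x k s) (x l s)) (vsub (x k s) (x l s)))). intros l Hl.
   apply (filterlim_ext (fun s => dot (x k s) (x k s) - 2 * dot (x k s) (x l s) + dot (x l s) (x l s))).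
   intros; symmetry; apply dsub_expand. rewrite dsub_expand.
   apply lim_add. apply lim_sub. apply lim_dot; apply xlim_right; auto; lra.
   apply lim_mul. apply lim_cst. apply lim_dot; apply xlim_right; auto; lra.
   apply lim_dot; apply xlim_right; auto; lra.
Qed.

Lemma energy_decr s : 0 < s -> energy N sigma x v s <= energy N sigma x v 0.
Proof.
 intros Hs. rewrite !energy_Edot. apply (mono_le Edot 0 (s + 1)); [| apply Edot_right | lra].
 intros u Hu. eexists. split. apply Edot_der. lra. apply Edot_der_le. lra.
Qed.


Hypothesis Hsig : 0 <= sigma.

Definition NE := INR N * energy N sigma x v 0.

Lemma pot_nonneg s : 0 <= rsum (fun k => rsum (fun l => dot (vsub (x k s) (x l s)) (vsub (x k s) (x l s))) N) N.
Proof. apply rsum_nonneg; intros; apply rsum_nonneg; intros; apply dot_ge0. Qed.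

Lemma Edot_parts s : / INR N * rsum (fun k => dot (v k s) (v k s)) N <= Edot s /\
  sigma / (2 * (INR N)^2) * rsum (fun k => rsum (fun l => dot (vsub (x k s) (x l s)) (vsub (x k s) (x l s))) N) N <= Edot s.
Proof.
 assert (HNpos : 0 < INR N) by (apply lt_0_INR; lia).
 unfold Edot. pose proof (pot_nonneg s).
 assert (0 <= rsum (fun k => dot (v k s) (v k s)) N) by (apply rsum_nonneg; intros; apply dot_ge0).
 assert (0 <= / INR N) by (left; apply Rinv_0_lt_compat; lra).
 assert (0 <= sigma / (2 * INR N ^ 2)) by (apply Rdiv_le_0_compat; auto; nra).
 split; nra.
Qed.

Lemma kin_bound k t : (k < N)%nat -> 0 < t -> dot (v k t) (v k t) <= NE.
Proof.
 intros Hk Ht. assert (HNpos : 0 < INR N) by (apply lt_0_INR; lia).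
 pose proof (energy_decr t Ht) as He. rewrite !energy_Edot in He. unfold NE. rewrite energy_Edot.
 destruct (Edot_parts t) as [H1 _].
 assert (dot (v k t) (v k t) <= rsum (fun k => dot (v k t) (v k t)) N).
 { apply (rsum_single (fun k => dot (v k t) (v k t))); auto. intros; apply dot_ge0. }
 assert (rsum (fun k => dot (v k t) (v k t)) N <= INR N * Edot t).
 { apply (Rmult_le_reg_l (/ INR N)). apply Rinv_0_lt_compat; lra. rewrite <- Rmult_assoc, Rinv_l by lra. lra. }
 nra.
Qed.

Lemma NE_nonneg : 0 <= NE.
Proof.
 assert (H : (0 < N)%nat) by lia.
 assert (0 < 1) by lra.
 pose proof (kin_bound 0 1 H ltac:(lra)). pose proof (dot_ge0 (v 0%nat 1)). lra.
Qed.

Lemma vbound k t : (k < N)%nat -> 0 < t -> vnorm (v k t) <= sqrt NE.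
Proof. intros. apply vnorm_le. apply sqrt_pos. rewrite pow2_sqrt by apply NE_nonneg. apply kin_bound; auto. Qed.

Lemma pot_bound t : 0 < t ->
  sigma * rsum (fun k => rsum (fun l => dot (vsub (x k t) (x l t)) (vsub (x k t) (x l t))) N) N <= 2 * INR N * NE.
Proof.
 intros Ht. assert (HNpos : 0 < INR N) by (apply lt_0_INR; lia).
 pose proof (energy_decr t Ht) as He. rewrite !energy_Edot in He. unfold NE. rewrite energy_Edot.
 destruct (Edot_parts t) as [_ H2].
 set (R0 := rsum (fun k => rsum (fun l => dot (vsub (x k t) (x l t)) (vsub (x k t) (x l t))) N) N) in *.
 assert (sigma * R0 = 2 * INR N ^ 2 * (sigma / (2 * INR N ^ 2) * R0)) by (field; lra).
 rewrite H. assert (0 < 2 * INR N ^ 2) by nra.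
 replace (2 * INR N * (INR N * Edot 0)) with (2 * INR N ^ 2 * Edot 0) by ring.
 apply Rmult_le_compat_l; lra.
Qed.

Lemma proj_le a b : dot a a = 1 -> dot b b = 1 ->
  vnorm (vsub (vscal 1 b) (vscal (dot a b) a)) <= vnorm (vsub b a).
Proof.
 intros Ha Hb. apply vnorm_le. apply vnorm_ge0. rewrite vnorm_sq.
 replace (dot (vsub (vscal 1 b) (vscal (dot a b) a)) (vsub (vscal 1 b) (vscal (dot a b) a)))
   with (dot b b - 2 * dot a b * dot a b + dot a b ^ 2 * dot a a) by (vdes; vunf; ring).
 replace (dot (vsub b a) (vsub b a)) with (dot b b - 2 * dot a b + dot a a) by (vdes; vunf; ring).
 rewrite Ha, Hb. pose proof (pow2_ge_0 (1 - dot a b)). nra.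
Qed.

Definition Sg k t := vsum (fun k0 => vscal (sigma / INR N) (vsub (vscal (vnorm (x k t) ^ 2) (x k0 t)) (vscal (dot (x k t) (x k0 t)) (x k t)))) N.
Definition Psi k t := vsum (fun j0 => vscal (psiij psi x k j0 t / INR N) (vsub (rot (x j0 t) (x k t) (v j0 t)) (v k t))) N.

Lemma accel_split k t : accel N sigma psi x v k t =
  vadd (vscal (- vnorm (v k t) ^ 2 / vnorm (x k t) ^ 2) (x k t)) (vadd (Psi k t) (Sg k t)).
Proof. reflexivity. Qed.

Lemma Sg_bound i t : (i < N)%nat -> 0 < t -> vnorm (Sg i t) <= sqrt (2 * sigma) * sqrt NE.
Proof.
 intros Hi Ht. assert (HNpos : 0 < INR N) by (apply lt_0_INR; lia).
 destruct (unit_all i t Hi ltac:(lra)) as [Hi1 _].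
 set (A := rsum (fun k => vnorm (vsub (x k t) (x i t))) N).
 assert (H1 : vnorm (Sg i t) <= sigma / INR N * A).
 { unfold Sg. eapply Rle_trans. apply vnorm_vsum. unfold A. rewrite <- rsum_scal. apply rsum_le. intros k Hk.
   rewrite vnorm_scal. rewrite Rabs_right by (apply Rle_ge, Rdiv_le_0_compat; lra).
   apply Rmult_le_compat_l. apply Rdiv_le_0_compat; lra.
   rewrite vnorm_sq, Hi1. destruct (unit_all k t Hk ltac:(lra)) as [Hk1 _]. apply proj_le; auto. }
 assert (HA0 : 0 <= A) by (apply rsum_nonneg; intros; apply vnorm_ge0).
 assert (H2 : A ^ 2 <= INR N * rsum (fun k => dot (vsub (x k t) (x i t)) (vsub (x k t) (x i t))) N).
 { eapply Rle_trans. apply rsum_cs. apply Rmult_le_compat_l. lra. right. apply rsum_ext. intros; apply vnorm_sq. }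
 assert (H3 : rsum (fun k => dot (vsub (x k t) (x i t)) (vsub (x k t) (x i t))) N
    <= rsum (fun k => rsum (fun l => dot (vsub (x k t) (x l t)) (vsub (x k t) (x l t))) N) N).
 { rewrite (rsum_swap (fun k l => dot (vsub (x k t) (x l t)) (vsub (x k t) (x l t)))).
   apply (rsum_single (fun l => rsum (fun k => dot (vsub (x k t) (x l t)) (vsub (x k t) (x l t))) N)); auto.
   intros; apply rsum_nonneg; intros; apply dot_ge0. }
 pose proof (pot_bound t Ht) as H4.
 assert (H5 : (sigma / INR N * A) ^ 2 <= 2 * sigma * NE).
 { replace ((sigma / INR N * A) ^ 2) with (sigma / INR N * (sigma / INR N) * A ^ 2) by (field; lra).
   assert (0 <= sigma / INR N) by (apply Rdiv_le_0_compat; lra).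
   assert (A ^ 2 <= INR N * rsum (fun k => rsum (fun l => dot (vsub (x k t) (x l t)) (vsub (x k t) (x l t))) N) N) by nra.
   assert (H6 : sigma / INR N * (sigma / INR N) * A ^ 2 <= sigma / INR N * (sigma / INR N) * (INR N * rsum (fun k => rsum (fun l => dot (vsub (x k t) (x l t)) (vsub (x k t) (x l t))) N) N)) by (apply Rmult_le_compat_l; nra).
   eapply Rle_trans. exact H6.
   replace (sigma / INR N * (sigma / INR N) * (INR N * rsum (fun k => rsum (fun l => dot (vsub (x k t) (x l t)) (vsub (x k t) (x l t))) N) N))
     with (sigma / INR N * (sigma * rsum (fun k => rsum (fun l => dot (vsub (x k t) (x l t)) (vsub (x k t) (x l t))) N) N)) by (field; lra).
   replace (2 * sigma * NE) with (sigma / INR N * (2 * INR N * NE)) by (field; lra).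
   apply Rmult_le_compat_l; auto. }
 eapply Rle_trans. exact H1.
 rewrite <- sqrt_mult by (try apply NE_nonneg; lra).
 rewrite <- (sqrt_pow2 (sigma / INR N * A)). apply sqrt_le_1. nra.
 apply Rmult_le_pos; [lra | apply NE_nonneg]. auto.
 apply Rmult_le_pos; auto. apply Rdiv_le_0_compat; lra.
Qed.


Lemma rmaxn_ge (f : nat -> R) n k : (k < n)%nat -> f k <= rmaxn f n.
Proof.
 induction n as [|m IH]; intros Hk. lia.
 destruct m as [|m'].
 - assert (k = 0%nat) by lia. subst. simpl. lra.
 - change (rmaxn f (S (S m'))) with (Rmax (rmaxn f (S m')) (f (S m'))).
   destruct (Nat.eq_dec k (S m')). subst. apply Rmax_r.
   eapply Rle_trans. apply IH. lia. apply Rmax_l.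
Qed.

Lemma maxpsi_ge k l t : (k < N)%nat -> (l < N)%nat -> psiij psi x k l t <= maxpsi N psi x t.
Proof.
 intros Hk Hl. unfold maxpsi. eapply Rle_trans.
 apply (rmaxn_ge (fun l0 => psiij psi x k l0 t) N l Hl).
 apply (rmaxn_ge (fun l1 => rmaxn (fun k0 => psiij psi x l1 k0 t) N) N k Hk).
Qed.

Lemma maxpsi_ge0 t : psi 0 <= maxpsi N psi x t.
Proof.
 assert (H : (0 < N)%nat) by lia.
 eapply Rle_trans. 2: apply (maxpsi_ge 0 0 t H H).
 unfold psiij. right. f_equal. unfold vnorm.
 replace (dot (vsub (x 0%nat t) (x 0%nat t)) (vsub (x 0%nat t) (x 0%nat t))) with 0 by (vdes; vunf; ring).
 symmetry; apply sqrt_0.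
Qed.

Lemma Psi_bound i t : (i < N)%nat -> 0 < t -> vnorm (Psi i t) <= 2 * maxpsi N psi x t * sqrt NE.
Proof.
 intros Hi Ht. assert (HNpos : 0 < INR N) by (apply lt_0_INR; lia).
 set (M := maxpsi N psi x t).
 unfold Psi. eapply Rle_trans. apply vnorm_vsum.
 replace (2 * M * sqrt NE) with (rsum (fun _ => M / INR N * (2 * sqrt NE)) N) by (rewrite rsum_const; field; lra).
 apply rsum_le. intros j Hj.
 rewrite vnorm_scal. pose proof (psi_nn i j t Hi Hj ltac:(lra)).
 rewrite Rabs_right by (apply Rle_ge, Rdiv_le_0_compat; lra).
 apply Rmult_le_compat. apply Rdiv_le_0_compat; lra. apply vnorm_ge0.
 apply Rmult_le_compat_r. left; apply Rinv_0_lt_compat; lra. apply maxpsi_ge; auto.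
 eapply Rle_trans. apply vnorm_sub.
 assert (vnorm (rot (x j t) (x i t) (v j t)) = vnorm (v j t)) by (unfold vnorm; rewrite rot_norm2; auto; lra).
 rewrite H0. pose proof (vbound j t Hj Ht). pose proof (vbound i t Hi Ht). lra.
Qed.


Hypothesis Hp0 : 0 < psi 0.

Definition Cbound := 80 + 8 * sqrt (2 * sigma) / psi 0.

Lemma abs5 a b c d e : Rabs (a + b + c - d - e) <= Rabs a + Rabs b + Rabs c + Rabs d + Rabs e.
Proof.
 unfold Rminus. eapply Rle_trans. apply Rabs_triang. rewrite Rabs_Ropp.
 eapply Rle_trans. apply Rplus_le_compat_r. apply Rabs_triang. rewrite Rabs_Ropp.
 eapply Rle_trans. apply Rplus_le_compat_r. apply Rplus_le_compat_r. apply Rabs_triang.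
 eapply Rle_trans. apply Rplus_le_compat_r. apply Rplus_le_compat_r. apply Rplus_le_compat_r. apply Rabs_triang.
 lra.
Qed.

Lemma main_bound i j t : (i < N)%nat -> (j < N)%nat -> 0 < t ->
  ex_derive (misalign x v i j) t /\
  Rabs (Derive (misalign x v i j) t) <= Cbound * (NE * sqrt NE + NE * sqrt NE / vnorm (vadd (x i t) (x j t)) + maxpsi N psi x t * NE).
Proof.
 intros Hi Hj Ht.
 destruct (unit_all i t Hi ltac:(lra)) as [Hi1 Hi2]. destruct (unit_all j t Hj ltac:(lra)) as [Hj1 Hj2].
 assert (Hc : 1 + dot (x j t) (x i t) <> 0) by (apply sphere_neq_opp; auto; apply Hopp; auto; lra).
 set (Dd := fun s => vsub (Rt (x j s) (x i s) (v j s)) (v i s)).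
 set (Et := Eterm (x j t) (x i t) (v j t) (v j t) (v i t)).
 set (D' := vsub (vadd (Rt (x j t) (x i t) (accel N sigma psi x v j t)) Et) (accel N sigma psi x v i t)).
 assert (HD : is_derive (fun s => dot (Dd s) (Dd s)) t (dot D' (Dd t) + dot (Dd t) D')).
 { apply dot_der; unfold Dd, D'; apply vder_sub; try apply vder'; auto; apply Rt_der; auto; try apply xder; auto; apply vder'; auto. }
 assert (Hloc : locally t (fun s => dot (Dd s) (Dd s) = misalign x v i j s)).
 { exists (mkposreal t Ht). intros s Hs. apply ballR in Hs. simpl in Hs.
   apply Rabs_def2 in Hs. destruct Hs as [Hs1 Hs2]. unfold minus, plus, opp in Hs1, Hs2; simpl in Hs1, Hs2.
   assert (Hs0 : 0 <= s) by lra.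
   destruct (unit_all i s Hi Hs0) as [Hi1' _]. destruct (unit_all j s Hj Hs0) as [Hj1' _].
   unfold misalign, Dd. rewrite rot_Rt; auto. rewrite vnorm_sq. reflexivity. }
 pose proof (is_derive_ext_loc _ _ _ _ Hloc HD) as HD'.
 split. exists (dot D' (Dd t) + dot (Dd t) D'). exact HD'.
 rewrite (is_derive_unique _ _ _ HD').
 set (Dt := Dd t) in *.
 set (V := sqrt NE). set (M := maxpsi N psi x t). set (s := vnorm (vadd (x i t) (x j t))).
 assert (HV : 0 <= V) by apply sqrt_pos.
 assert (HVV : V * V = NE) by (apply sqrt_sqrt; apply NE_nonneg).
 pose proof (vbound i t Hi Ht) as Hvi. pose proof (vbound j t Hj Ht) as Hvj. fold V in Hvi, Hvj.
 assert (HRt : forall z, vnorm (Rt (x j t) (x i t) z) = vnorm z) by (intros; apply Rt_norm; auto).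
 assert (HDt : vnorm Dt <= 2 * V).
 { unfold Dt, Dd. eapply Rle_trans. apply vnorm_sub. rewrite HRt. lra. }
 assert (Hdx : dot Dt (x i t) = 0).
 { unfold Dt, Dd. rewrite dot_comm, dot_sub_r, Rt_dot_x by auto. lra. }
 assert (Heq : dot Dt D' = dot Dt (Rt (x j t) (x i t) (Psi j t)) + dot Dt (Rt (x j t) (x i t) (Sg j t)) + dot Dt Et
                         - dot Dt (Psi i t) - dot Dt (Sg i t)).
 { unfold D'. rewrite (accel_split j t), (accel_split i t), !Rt_add, Rt_scal, Rt_y by auto.
   rewrite !dot_sub_r, !dot_add_r, !dot_scal_r, Hdx. ring. }
 assert (Hcpos : 0 < 1 + dot (x j t) (x i t)).
 { pose proof (sphere_c_bounds (x i t) (x j t) Hi1 Hj1). lra. }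
 assert (HEt : vnorm Et <= 8 * V ^ 2 + 16 * V ^ 2 / s).
 { unfold Et, s. apply Eterm_bound; auto. }
 pose proof (Psi_bound i t Hi Ht) as HPi. pose proof (Psi_bound j t Hj Ht) as HPj.
 pose proof (Sg_bound i t Hi Ht) as HSi. pose proof (Sg_bound j t Hj Ht) as HSj.
 fold V M in HPi, HPj, HSi, HSj.
 set (q := sqrt (2 * sigma)) in *.
 assert (Hq : 0 <= q) by apply sqrt_pos.
 assert (B1 : Rabs (dot Dt (Rt (x j t) (x i t) (Psi j t))) <= 2 * V * (2 * M * V)) by (apply dotabs_le; auto; rewrite HRt; lra).
 assert (B2 : Rabs (dot Dt (Rt (x j t) (x i t) (Sg j t))) <= 2 * V * (q * V)) by (apply dotabs_le; auto; rewrite HRt; lra).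
 assert (B3 : Rabs (dot Dt Et) <= 2 * V * (8 * V ^ 2 + 16 * V ^ 2 / s)) by (apply dotabs_le; auto).
 assert (B4 : Rabs (dot Dt (Psi i t)) <= 2 * V * (2 * M * V)) by (apply dotabs_le; auto).
 assert (B5 : Rabs (dot Dt (Sg i t)) <= 2 * V * (q * V)) by (apply dotabs_le; auto).
 assert (Htot : Rabs (dot Dt D') <= 8 * M * V * V + 4 * q * V * V + 16 * V ^ 3 + 32 * (V ^ 3 / s)).
 { rewrite Heq. eapply Rle_trans. apply abs5. unfold Rdiv in *. lra. }
 rewrite (dot_comm D' Dt). replace (dot Dt D' + dot Dt D') with (2 * dot Dt D') by ring.
 rewrite Rabs_mult, (Rabs_right 2) by lra.
 assert (HM : psi 0 <= M) by apply maxpsi_ge0.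
 assert (HqM : q <= q / psi 0 * M).
 { replace (q / psi 0 * M) with (q + q * (M - psi 0) / psi 0) by (field; lra).
   assert (0 <= q * (M - psi 0) / psi 0) by (apply Rdiv_le_0_compat; [apply Rmult_le_pos|]; lra). lra. }
 assert (Hs : 0 <= s) by apply vnorm_ge0.
 assert (Hsp : 0 < s).
 { assert (s * s = 2 * (1 + dot (x j t) (x i t))).
   { unfold s. rewrite vnorm_sq'. replace (dot (vadd (x i t) (x j t)) (vadd (x i t) (x j t))) with (dot (x i t) (x i t) + 2 * dot (x j t) (x i t) + dot (x j t) (x j t)) by (vdes; vunf; ring). lra. }
   destruct (Req_dec s 0) as [E|E]. rewrite E in H; lra. lra. }
 assert (Hw3 : 0 <= V ^ 3 / s) by (apply Rdiv_le_0_compat; auto; apply pow_le; auto).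
 rewrite <- HVV. unfold Cbound. fold q.
 set (r := q / psi 0) in *.
 assert (Hr : 0 <= r) by (unfold r; apply Rdiv_le_0_compat; lra).
 replace (V * V * V / s) with (V ^ 3 / s) by (unfold Rdiv; ring).
 set (W := V ^ 3 / s) in *.
 assert (0 <= V * V) by nra. assert (0 <= V * V * V) by (apply Rmult_le_pos; nra).
 assert (q * (V * V) <= r * M * (V * V)) by (apply Rmult_le_compat_r; auto).
 assert (0 <= r * (V * V * V)) by (apply Rmult_le_pos; auto).
 assert (0 <= r * W) by (apply Rmult_le_pos; auto).
 assert (0 <= M * (V * V)) by (apply Rmult_le_pos; lra).
 assert (0 <= r * M * (V * V)) by (apply Rmult_le_pos; [apply Rmult_le_pos|]; lra).
 replace (V ^ 3) with (V * V * V) in Htot by ring.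
 assert (0 <= Rabs (dot Dt D')) by apply Rabs_pos.
 replace (8 * q / psi 0) with (8 * r) by (unfold r, Rdiv; ring). lra.
Qed.

End Inv.

Theorem lemma4p3 (sigma : R) (psi : R -> R) :
  0 <= sigma ->
  admissible_psi psi ->
  exists C : R, 0 < C /\
  forall (N : nat) (x v : nat -> R -> vec),
    (1 <= N)%nat ->
    is_solution N sigma psi x v ->
    (forall i, (i < N)%nat -> vnorm (x i 0) = 1 /\ dot (v i 0) (x i 0) = 0) ->
    (forall i j t, (i < N)%nat -> (j < N)%nat -> 0 <= t ->
       psiij psi x i j t = psiij psi x j i t) ->
    (forall i j t, (i < N)%nat -> (j < N)%nat -> 0 <= t ->
       x i t <> vopp (x j t)) ->
    forall i j t, (i < N)%nat -> (j < N)%nat -> 0 < t ->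
      let NE := INR N * energy N sigma x v 0 in
      ex_derive (misalign x v i j) t /\
      Rabs (Derive (misalign x v i j) t)
        <= C * (NE * sqrt NE
                + NE * sqrt NE / vnorm (vadd (x i t) (x j t))
                + maxpsi N psi x t * NE).
Proof.
 intros Hsig Hadm.
 pose proof (psi0_pos psi Hadm) as Hp0.
 destruct Hadm as [dpsi [_ [_ [Hnn [Hdec _]]]]].
 exists (Cbound sigma psi). split.
 { unfold Cbound. assert (0 <= sqrt (2 * sigma)) by apply sqrt_pos.
   assert (0 <= 8 * sqrt (2 * sigma) / psi 0) by (apply Rdiv_le_0_compat; lra). lra. }
 intros N x v HN Hsol Hinit Hsym Hopp i j t Hi Hj Ht. cbv zeta.
 exact (main_bound N sigma psi x v HN Hsol Hinit Hopp Hnn Hdec Hsym Hsig Hp0 i j t Hi Hj Ht).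
Qed.
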